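(* Let $\mathbf{L}\in\{\mathbf{K}_D,\mathbf{KD}_D,\mathbf{KT}_D\}$. Let $\alpha$ be a formula, let $Q\subseteq \mathsf{V}(\alpha)$ be a finite set of propositional variables and $B\subseteq \mathsf{Agt}(\alpha)$ a finite set of agent symbols. (Pre-interpolant.) There exists a formula $I_{pre}$ such that: (1) no variable of $Q$ and no agent of $B$ occurs in $I_{pre}$, i.e. $\mathsf{V}(I_{pre})\cap Q=\emptyset$ and $\mathsf{Agt}(I_{pre})\cap B=\emptyset$; (2) $I_{pre}\Rightarrow\alpha$ is derivable in $\mathsf{G}(\mathbf{L})$; (3) for every formula $\beta$ with $\mathsf{V}(\beta)\cap Q=\emptyset$ and $\mathsf{Agt}(\beta)\cap B=\emptyset$, if $\beta\Rightarrow\alpha$ is derivable in $\mathsf{G}(\mathbf{L})$ then $\beta\Rightarrow I_{pre}$ is derivable in $\mathsf{G}(\mathbf{L})$. (Post-interpolant.) There exists a formula $I_{post}$ such that: (1) $\mathsf{V}(I_{post})\cap Q=\emptyset$ and $\mathsf{Agt}(I_{post})\cap B=\emptyset$; (2) $\alpha\Rightarrow I_{post}$ is derivable in $\mathsf{G}(\mathbf{L})$; (3) for every formula $\beta$ with $\mathsf{V}(\beta)\cap Q=\emptyset$ and $\mathsf{Agt}(\beta)\cap B=\emptyset$, if $\alpha\Rightarrow\beta$ is derivable in $\mathsf{G}(\mathbf{L})$ then $I_{post}\Rightarrow\beta$ is derivable in $\mathsf{G}(\mathbf{L})$.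
   Context: Language: fix a finite nonempty set $\mathsf{Agt}$ of agent symbols and a countable set $\mathsf{Prop}$ of propositional variables; $\mathsf{Grp}$ is the set of nonempty subsets of $\mathsf{Agt}$. Formulas: $\alpha::=p\mid\bot\mid\alpha\wedge\alpha\mid\alpha\vee\alpha\mid\alpha\rightarrow\alpha\mid\neg\alpha\mid D_G\alpha$ with $p\in\mathsf{Prop}$, $G\in\mathsf{Grp}$ ($D_G$ is distributed knowledge of group $G$). $\mathsf{V}(\alpha)$ is the set of propositional variables occurring in $\alpha$; $\mathsf{Agt}(\alpha)$ is the set of agent symbols occurring in $\alpha$ (the union of all $G$ with $D_G$ occurring in $\alpha$); for multisets these are unions. An outmost-boxed formula is one of the form $D_G\gamma$. Sequent calculi: a sequent $\Gamma\Rightarrow\Delta$ is a pair of finite multisets of formulas. $\mathsf{G}(\mathbf{K}_D)$ has initial sequents $\Gamma,p\Rightarrow p,\Delta$ ($p\in\mathsf{Prop}$) and $\bot,\Gamma\Rightarrow\Delta$; the propositional rules: $(R\wedge)$ from $\Gamma\Rightarrow\Delta,\alpha_1$ and $\Gamma\Rightarrow\Delta,\alpha_2$ infer $\Gamma\Rightarrow\Delta,\alpha_1\wedge\alpha_2$; $(L\wedge)$ from $\alpha_1,\alpha_2,\Gamma\Rightarrow\Delta$ infer $\alpha_1\wedge\alpha_2,\Gamma\Rightarrow\Delta$; $(R\vee)$ from $\Gamma\Rightarrow\Delta,\alpha_1,\alpha_2$ infer $\Gamma\Rightarrow\Delta,\alpha_1\vee\alpha_2$; $(L\vee)$ from $\alpha_1,\Gamma\Rightarrow\Delta$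 and $\alpha_2,\Gamma\Rightarrow\Delta$ infer $\alpha_1\vee\alpha_2,\Gamma\Rightarrow\Delta$; $(R\rightarrow)$ from $\alpha_1,\Gamma\Rightarrow\Delta,\alpha_2$ infer $\Gamma\Rightarrow\Delta,\alpha_1\rightarrow\alpha_2$; $(L\rightarrow)$ from $\Gamma\Rightarrow\Delta,\alpha_1$ and $\alpha_2,\Gamma\Rightarrow\Delta$ infer $\alpha_1\rightarrow\alpha_2,\Gamma\Rightarrow\Delta$; $(R\neg)$ from $\alpha,\Gamma\Rightarrow\Delta$ infer $\Gamma\Rightarrow\Delta,\neg\alpha$; $(L\neg)$ from $\Gamma\Rightarrow\Delta,\alpha$ infer $\neg\alpha,\Gamma\Rightarrow\Delta$; and the modal rule $(D_K)$: from $\alpha_1,\dots,\alpha_n\Rightarrow\beta$ ($n\ge 0$) infer $\Sigma,D_{G_1}\alpha_1,\dots,D_{G_n}\alpha_n\Rightarrow D_G\beta,\Omega$, provided $G_i\subseteq G$ for all $i$, $\Sigma$ consists only of propositional variables, $\bot$, and formulas $D_H\gamma$ with $H\not\subseteq G$, and $\Omega$ consists only of propositional variables, $\bot$ and outmost-boxed formulas. $\mathsf{G}(\mathbf{KD}_D)$ adds $(D_D)$: from $\Gamma\Rightarrow$ (empty succedent) with $\Gamma$ nonempty infer $\Sigma,D_{\{a\}}\Gamma\Rightarrow\Omega$ (where $a\in\mathsf{Agt}$, $D_{\{a\}}\Gamma=\{D_{\{a\}}\gamma:\gamma\in\Gamma\}$), provided $\Sigma$ consists only of propositional variables, $\bot$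 and formulas $D_H\gamma$ with $H\neq\{a\}$, and $\Omega$ only of propositional variables, $\bot$ and outmost-boxed formulas. $\mathsf{G}(\mathbf{KT}_D)$ adds to $\mathsf{G}(\mathbf{K}_D)$ the rule $(D_T)$: from $D_G\alpha,\alpha,\Gamma\Rightarrow\Delta$ infer $D_G\alpha,\Gamma\Rightarrow\Delta$. A sequent is derivable if it is the root of a finite tree built from initial sequents by these rules. *)

(* Defs.v *)
From Stdlib Require Import Permutation.
From mathcomp Require Import all_boot.
Set Implicit Arguments.
Unset Strict Implicit.
Unset Printing Implicit Defensive.

Definition grp (A : finType) := {G : {set A} | G != set0}.

Inductive form (A : finType) : Type :=
| Var : nat -> form A
| Bot : form A
| And : form A -> form A -> form A
| Or  : form A -> form A -> form A
| Imp : form A -> form A -> form A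
| Neg : form A -> form A
| Box : grp A -> form A -> form A.

Arguments Bot {A}.

Fixpoint vars (A : finType) (f : form A) : seq nat :=
  match f with
  | Var p => [:: p]
  | Bot => [::]
  | And a b | Or a b | Imp a b => vars a ++ vars b
  | Neg a => vars a
  | Box _ a => vars a
  end.

Fixpoint agts (A : finType) (f : form A) : {set A} :=
  match f with
  | Var _ | Bot => set0
  | And a b | Or a b | Imp a b => agts a :|: agts b
  | Neg a => agts a
  | Box G a => val G :|: agts a
  end.

Inductive logic := LK | LKD | LKT.

Definition sigmaK (A : finType) (G : {set A}) (f : form A) : Prop :=
  match f with
  | Var _ | Bot => True
  | Box H _ => ~~ (val H \subset G)
  | _ => False
  end.

Definition sigmaD (A : finType) (a : A) (f : form A) : Prop :=
  match f with
  | Var _ | Bot => True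
  | Box H _ => val H != [set a]
  | _ => False
  end.

Definition omegaOK (A : finType) (f : form A) : Prop :=
  match f with
  | Var _ | Bot | Box _ _ => True
  | _ => False
  end.

(* Sequents Gamma => Delta: pairs of finite multisets, represented as lists
   taken up to permutation (rule [Exch]). *)
Inductive derivable (A : finType) (L : logic) : seq (form A) -> seq (form A) -> Prop :=
| Exch G D G' D' : derivable L G D -> Permutation G G' -> Permutation D D' ->
    derivable L G' D'
| Init p G D : derivable L (Var A p :: G) (Var A p :: D)
| BotL G D : derivable L (Bot :: G) D
| RAnd G D a1 a2 : derivable L G (a1 :: D) -> derivable L G (a2 :: D) ->
    derivable L G (And a1 a2 :: D)
| LAnd G D a1 a2 : derivable L (a1 :: a2 :: G) D -> derivable L (And a1 a2 :: G) D
| ROr G D a1 a2 : derivable L G (a1 :: a2 :: D) -> derivable L G (Or a1 a2 :: D)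
| LOr G D a1 a2 : derivable L (a1 :: G) D -> derivable L (a2 :: G) D ->
    derivable L (Or a1 a2 :: G) D
| RImp G D a1 a2 : derivable L (a1 :: G) (a2 :: D) -> derivable L G (Imp a1 a2 :: D)
| LImp G D a1 a2 : derivable L G (a1 :: D) -> derivable L (a2 :: G) D ->
    derivable L (Imp a1 a2 :: G) D
| RNeg G D a : derivable L (a :: G) D -> derivable L G (Neg a :: D)
| LNeg G D a : derivable L G (a :: D) -> derivable L (Neg a :: G) D
| DK (ps : seq (grp A * form A)) (G : grp A) (b : form A) Sig Om :
    derivable L [seq p.2 | p <- ps] [:: b] ->
    (forall p, List.In p ps -> val p.1 \subset val G) ->
    (forall f, List.In f Sig -> sigmaK (val G) f) ->
    (forall f, List.In f Om -> omegaOK f) ->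
    derivable L (Sig ++ [seq Box p.1 p.2 | p <- ps]) (Box G b :: Om)
| DD (a : A) (Ga : grp A) (Gm : seq (form A)) Sig Om :
    L = LKD -> val Ga = [set a] -> Gm <> [::] ->
    derivable L Gm [::] ->
    (forall f, List.In f Sig -> sigmaD a f) ->
    (forall f, List.In f Om -> omegaOK f) ->
    derivable L (Sig ++ [seq Box Ga g | g <- Gm]) Om
| DT G D (H : grp A) a : L = LKT ->
    derivable L (Box H a :: a :: G) D -> derivable L (Box H a :: G) D.

Definition avoids (A : finType) (Q : seq nat) (B : {set A}) (f : form A) : Prop :=
  (forall q, q \in Q -> q \notin vars f) /\ [disjoint agts f & B].

(* Main.v *)
Require Import Defs.
From mathcomp Require Import all_boot.
From Stdlib Require Import Permutation List Classical.
From mathcomp Require Import all_boot zify.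
Set Implicit Arguments.
Unset Strict Implicit.
Unset Printing Implicit Defensive.

Lemma In_cat (T : Type) (x : T) (s1 s2 : seq T) :
  List.In x (s1 ++ s2) <-> List.In x s1 \/ List.In x s2.
Proof. exact: in_app_iff. Qed.

Lemma In_map_iff (T U : Type) (f : T -> U) (y : U) (s : seq T) :
  List.In y (map f s) <-> exists x, f x = y /\ List.In x s.
Proof. exact: in_map_iff. Qed.

Lemma In_filter (T : Type) (p : pred T) x s :
  List.In x (filter p s) <-> List.In x s /\ p x.
Proof.
elim: s => [|y s IH] /=; first by split=> // [[]].
case: ifP => hy /=; rewrite IH; split.
- by case=> [<-|[]]; auto.
- by case=> [[<-|h] hp]; auto.
- by move=> [h hp]; auto.
- by case=> [[<-|h] hp]; [rewrite hy in hp|auto].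
Qed.

Lemma perm_filterC (T : Type) (p : pred T) (s : seq T) :
  Permutation s (filter p s ++ filter (predC p) s).
Proof.
elim: s => [|x s IH] //=; case: (p x) => /=.
- by apply: perm_skip.
- apply: Permutation_trans (perm_skip x IH) _.
  exact: (@Permutation_middle _ (filter p s) (filter (predC p) s) x).
Qed.

Lemma perm_mid (T : Type) (a b : seq T) x :
  Permutation (x :: a ++ b) (a ++ x :: b).
Proof. exact: Permutation_middle. Qed.

Lemma perm_cat (T : Type) (a b c d : seq T) :
  Permutation a b -> Permutation c d -> Permutation (a ++ c) (b ++ d).
Proof. exact: Permutation_app. Qed.

Lemma perm_catC (T : Type) (a b : seq T) : Permutation (a ++ b) (b ++ a).
Proof. exact: Permutation_app_comm. Qed.

Lemma perm_catA (T : Type) (a b c : seq T) : (a ++ b) ++ c = a ++ (b ++ c).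
Proof. by rewrite catA. Qed.

Lemma perm_In (T : Type) (x : T) l l' : Permutation l l' -> List.In x l -> List.In x l'.
Proof. exact: Permutation_in. Qed.

Lemma In_perm (T : Type) (x : T) l : List.In x l -> exists l', Permutation l (x :: l').
Proof.
move=> h; have [l1 [l2 ->]] := in_split _ _ h; exists (l1 ++ l2).
apply: Permutation_sym; exact: Permutation_middle.
Qed.

Lemma perm_cons_split (T : Type) (x : T) l l1 l2 :
  Permutation (x :: l) (l1 ++ l2) ->
  (exists l1', Permutation l1 (x :: l1') /\ Permutation l (l1' ++ l2)) \/
  (exists l2', Permutation l2 (x :: l2') /\ Permutation l (l1 ++ l2')).
Proof.
move=> hp.
have : List.In x (l1 ++ l2) by apply: (perm_In hp); left.
case/In_cat => hh; have [a [b e]] := in_split _ _ hh;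
  have e' : _ = a ++ x :: b := e; clear e; subst.
- left; exists (a ++ b); split.
    apply: Permutation_sym; exact: Permutation_middle.
  have h : Permutation (x :: l) (x :: (a ++ b) ++ l2).
    apply: Permutation_trans hp _.
    rewrite -catA /=.
    apply: Permutation_sym.
    have := (@perm_mid _ a (b ++ l2) x). by rewrite -catA.
  exact: Permutation_cons_inv h.
- right; exists (a ++ b); split.
    apply: Permutation_sym; exact: Permutation_middle.
  have h : Permutation (x :: l) (x :: l1 ++ (a ++ b)).
    apply: Permutation_trans hp _.
    apply: Permutation_sym.
    have := (@perm_mid _ (l1 ++ a) b x).
    by rewrite -!catA.
  exact: Permutation_cons_inv h.
Qed.

Lemma perm_app_split (T : Type) (l m G1 G2 : seq T) :
  Permutation (l ++ m) (G1 ++ G2) ->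
  exists l1 l2 m1 m2, Permutation l (l1 ++ l2) /\ Permutation m (m1 ++ m2) /\
    Permutation G1 (l1 ++ m1) /\ Permutation G2 (l2 ++ m2).
Proof.
elim: l G1 G2 => [|x l IH] G1 G2 /= hp.
  by exists [::], [::], G1, G2; split=> //; split=> //; split.
case: (perm_cons_split hp) => [[G1' [h1 h2]]|[G2' [h1 h2]]].
- have [l1 [l2 [m1 [m2 [a [b [c d]]]]]]] := IH _ _ h2.
  exists (x :: l1), l2, m1, m2; split; first exact: perm_skip.
  split=> //; split=> //.
  apply: Permutation_trans h1 _; exact: perm_skip.
- have [l1 [l2 [m1 [m2 [a [b [c d]]]]]]] := IH _ _ h2.
  exists l1, (x :: l2), m1, m2; split.
    apply: Permutation_trans (perm_skip x a) _; exact: Permutation_middle.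
  split=> //; split=> //.
  apply: Permutation_trans h1 _; exact: perm_skip.
Qed.

Lemma perm_map_split (T U : Type) (f : T -> U) ps m1 m2 :
  Permutation (map f ps) (m1 ++ m2) ->
  exists ps1 ps2, Permutation ps (ps1 ++ ps2) /\ m1 = map f ps1 /\ m2 = map f ps2.
Proof.
move=> hp.
have [l3 [e hp2]] := @Permutation_map_inv _ _ f (m1 ++ m2) ps (Permutation_sym hp).
have [a [b [e1 [e2 e3]]]] := map_eq_app _ _ _ _ (Logic.eq_sym e).
exists a, b; split; last by split.
by rewrite e1 in hp2.
Qed.

Record model (A : finType) := Model {
  Rel : A -> seq nat -> seq nat -> Prop;
  Val : nat -> seq nat -> Prop }.

Definition Rg (A : finType) (M : model A) (G : {set A}) w v :=
  forall a, a \in G -> Rel M a w v.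

Fixpoint sat (A : finType) (M : model A) (w : seq nat) (f : form A) : Prop :=
  match f with
  | Var p => Val M p w
  | Bot => False
  | And a b => sat M w a /\ sat M w b
  | Or a b => sat M w a \/ sat M w b
  | Imp a b => sat M w a -> sat M w b
  | Neg a => ~ sat M w a
  | Box G a => forall v, Rg M (val G) w v -> sat M v a
  end.

Definition cls (A : finType) (L : logic) (M : model A) : Prop :=
  match L with
  | LK => True
  | LKD => forall a w, exists v, Rel M a w v
  | LKT => forall a w, Rel M a w w
  end.

Fixpoint allT (A : finType) (M : model A) w (l : seq (form A)) : Prop :=
  match l with [::] => True | f :: l => sat M w f /\ allT M w l end.
Fixpoint exT (A : finType) (M : model A) w (l : seq (form A)) : Prop :=
  match l with [::] => False | f :: l => sat M w f \/ exT M w l end.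

Definition valid (A : finType) (L : logic) (G D : seq (form A)) :=
  forall M w, cls L M -> allT M w G -> exT M w D.

Lemma allT_In (A : finType) (M : model A) w l :
  allT M w l <-> forall f, List.In f l -> sat M w f.
Proof.
elim: l => [|f l IH] /=; first by split.
rewrite IH; split; first by move=> [h1 h2] g [<-|]; auto.
by move=> h; split; auto.
Qed.

Lemma exT_In (A : finType) (M : model A) w l :
  exT M w l <-> exists f, List.In f l /\ sat M w f.
Proof.
elim: l => [|f l IH] /=; first by split=> // [[f []]].
rewrite IH; split.
- by case=> [h|[g [h1 h2]]]; [exists f|exists g]; auto.
- by case=> g [[<-|h1] h2]; [left|right; exists g].
Qed.

Lemma allT_perm (A : finType) (M : model A) w l l' :
  Permutation l l' -> allT M w l -> allT M w l'.
Proof.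
move=> hp; rewrite !allT_In => h f hf; apply: h.
exact: (perm_In (Permutation_sym hp)).
Qed.

Lemma exT_perm (A : finType) (M : model A) w l l' :
  Permutation l l' -> exT M w l -> exT M w l'.
Proof.
move=> hp; rewrite !exT_In => [[f [h1 h2]]]; exists f; split=> //.
exact: (perm_In hp).
Qed.

Lemma allT_cat (A : finType) (M : model A) w l l' :
  allT M w (l ++ l') <-> allT M w l /\ allT M w l'.
Proof. elim: l => [|f l IH] /=; [tauto| rewrite IH; tauto]. Qed.

Lemma exT_cat (A : finType) (M : model A) w l l' :
  exT M w (l ++ l') <-> exT M w l \/ exT M w l'.
Proof. elim: l => [|f l IH] /=; [tauto| rewrite IH; tauto]. Qed.

Lemma valid_perm (A : finType) L (G G' D D' : seq (form A)) :
  Permutation G G' -> Permutation D D' -> valid L G D -> valid L G' D'.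
Proof.
move=> h1 h2 v M w hM hG; apply: (exT_perm h2); apply: v => //.
exact: (allT_perm (Permutation_sym h1)).
Qed.

Fixpoint depth (A : finType) (f : form A) : nat :=
  match f with
  | Var _ | Bot => 0
  | And a b | Or a b | Imp a b => maxn (depth a) (depth b)
  | Neg a => depth a
  | Box _ a => (depth a).+1
  end.

Definition md (A : finType) (l : seq (form A)) := foldr (fun f m => maxn (depth f) m) 0 l.
Definition VS (A : finType) (l : seq (form A)) := foldr (fun f s => vars f ++ s) [::] l.
Definition AS (A : finType) (l : seq (form A)) := foldr (fun f S => agts f :|: S) set0 l.

Lemma md_cat (A : finType) (l l' : seq (form A)) : md (l ++ l') = maxn (md l) (md l').
Proof. elim: l => [|f l IH] /=; [by rewrite max0n | rewrite IH; lia]. Qed.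
Lemma VS_cat (A : finType) (l l' : seq (form A)) : VS (l ++ l') = VS l ++ VS l'.
Proof. by elim: l => [|f l IH] //=; rewrite IH catA. Qed.
Lemma AS_cat (A : finType) (l l' : seq (form A)) : AS (l ++ l') = AS l :|: AS l'.
Proof. by elim: l => [|f l IH] /=; [rewrite set0U | rewrite IH setUA]. Qed.

Lemma md_In (A : finType) (f : form A) l : List.In f l -> depth f <= md l.
Proof. elim: l => [|g l IH] //= [->|h]; [lia| have := IH h; lia]. Qed.

Lemma md_lt (A : finType) (l : seq (form A)) d :
  0 < d -> (forall f, List.In f l -> depth f < d) -> md l < d.
Proof.
elim: l => [|g l IH] //= hd h.
have := h g (or_introl erefl); have := IH hd (fun f hf => h f (or_intror hf)); lia.
Qed.

Lemma perm_md (A : finType) (l l' : seq (form A)) : Permutation l l' -> md l = md l'.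
Proof. elim=> //= [x l1 l2 _ ->|x y l0|l1 l2 l3 _ -> _ ->] //; lia. Qed.
Lemma perm_VS (A : finType) (l l' : seq (form A)) : Permutation l l' -> VS l =i VS l'.
Proof.
elim=> //= [x l1 l2 _ h|x y l0|l1 l2 l3 _ h1 _ h2] z; rewrite ?mem_cat ?h //.
  by case: (z \in vars x); case: (z \in vars y).
by rewrite h1 h2.
Qed.
Lemma perm_AS (A : finType) (l l' : seq (form A)) : Permutation l l' -> AS l = AS l'.
Proof. elim=> //= [x l1 l2 _ ->|x y l0|l1 l2 l3 _ -> _ ->] //; by rewrite setUCA. Qed.

Definition lang (A : finType) (I : form A) l := {subset vars I <= VS l} /\ agts I \subset AS l.
Definition sublang (A : finType) (l l' : seq (form A)) :=
  [/\ {subset VS l <= VS l'}, AS l \subset AS l' & md l <= md l'].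

Ltac sltac :=
  split; [ let x := fresh in let hx := fresh in
           move=> x; rewrite ?VS_cat /= ?VS_cat ?mem_cat /= ?mem_cat;
           move=> hx; repeat (case/orP: hx => hx); first [ by move: hx; rewrite ?in_nil | rewrite hx /= ?orbT // ]
         | let y := fresh in let hy := fresh in
           apply/subsetP => y; rewrite ?AS_cat /= ?AS_cat !inE;
           move=> hy; repeat (case/orP: hy => hy); first [ by move: hy; rewrite ?inE | rewrite hy /= ?orbT // ]
         | rewrite ?md_cat /= ?md_cat; lia ].

Lemma lang_mono (A : finType) (I : form A) l l' : lang I l -> sublang l l' -> lang I l'.
Proof.
move=> [h1 h2] [s1 s2 _]; split; first by move=> x /h1 /s1.
exact: subset_trans s2.
Qed.

Lemma lang_bin (A : finType) (I1 I2 I : form A) l :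
  {subset vars I <= vars I1 ++ vars I2} -> agts I \subset agts I1 :|: agts I2 ->
  lang I1 l -> lang I2 l -> lang I l.
Proof.
move=> hv ha [v1 a1] [v2 a2]; split.
  by move=> x /hv; rewrite mem_cat => /orP [/v1|/v2].
apply: subset_trans ha _; by rewrite subUset a1 a2.
Qed.

Definition Top (A : finType) : form A := Neg Bot.

Definition Interp (A : finType) L (I : form A) G1 D1 G2 D2 :=
  valid L G1 (I :: D1) /\ valid L (I :: G2) D2 /\ lang I (G1 ++ D1) /\
  lang I (G2 ++ D2) /\ depth I <= md (G1 ++ D1).

Lemma mkInterp (A : finType) L (I : form A) G1 D1 G2 D2 :
  valid L G1 (I :: D1) -> valid L (I :: G2) D2 -> lang I (G1 ++ D1) ->
  lang I (G2 ++ D2) -> depth I <= md (G1 ++ D1) -> Interp L I G1 D1 G2 D2.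
Proof. by rewrite /Interp; tauto. Qed.

Lemma sublang_perm (A : finType) (l l' : seq (form A)) : Permutation l l' -> sublang l l'.
Proof.
move=> h; split; first by move=> x; rewrite (perm_VS h).
  by rewrite (perm_AS h).
by rewrite (perm_md h).
Qed.

Lemma Interp_perm (A : finType) L (I : form A) G1 D1 G2 D2 G1' D1' G2' D2' :
  Permutation G1 G1' -> Permutation D1 D1' -> Permutation G2 G2' -> Permutation D2 D2' ->
  Interp L I G1 D1 G2 D2 -> Interp L I G1' D1' G2' D2'.
Proof.
move=> p1 p2 p3 p4; rewrite {1}/Interp => -[v1 [v2 [l1 [l2 d]]]]; apply: mkInterp.
- exact: (valid_perm p1 (perm_skip I p2) v1).
- exact: (valid_perm (perm_skip I p3) p4 v2).
- apply: lang_mono l1 _; apply: sublang_perm; exact: perm_cat.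
- apply: lang_mono l2 _; apply: sublang_perm; exact: perm_cat.
- by rewrite -(perm_md (perm_cat p1 p2)).
Qed.

Lemma Interp_Bot (A : finType) L (G1 D1 G2 D2 : seq (form A)) :
  valid L G1 D1 -> Interp L Bot G1 D1 G2 D2.
Proof.
move=> v; apply: mkInterp => //.
- by move=> M w hM hG /=; right; apply: v.
- by move=> M w hM /= [].
- by split=> //; rewrite sub0set.
- by split=> //; rewrite sub0set.
Qed.

Lemma Interp_Top (A : finType) L (G1 D1 G2 D2 : seq (form A)) :
  valid L G2 D2 -> Interp L (Top A) G1 D1 G2 D2.
Proof.
move=> v; apply: mkInterp => //.
- by move=> M w hM hG /=; left.
- by move=> M w hM /= [_ h]; apply: v.
- by split=> //; rewrite sub0set.
- by split=> //; rewrite sub0set.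
Qed.

Lemma InterpE (A : finType) L (I : form A) G1 D1 G2 D2 : Interp L I G1 D1 G2 D2 ->
  valid L G1 (I :: D1) /\ valid L (I :: G2) D2 /\ lang I (G1 ++ D1) /\
  lang I (G2 ++ D2) /\ depth I <= md (G1 ++ D1).
Proof. by []. Qed.

Lemma lang_In (A : finType) (f : form A) l : List.In f l -> lang f l.
Proof.
elim: l => [|g l IH] //= [->|h].
  split; first by move=> x hx; rewrite mem_cat hx.
  exact: subsetUl.
have [h1 h2] := IH h; split; first by move=> x /h1 hx; rewrite mem_cat hx orbT.
apply: subset_trans h2 _; exact: subsetUr.
Qed.

Lemma lang_depth_un (A : finType) (I : form A) la la' l l' :
  lang I la -> lang I la' -> depth I <= md la -> sublang la l -> sublang la' l' ->
  lang I l /\ lang I l' /\ depth I <= md l.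
Proof.
move=> h1 h2 d s1 s2; split; first exact: lang_mono h1 s1.
split; first exact: lang_mono h2 s2.
case: s1 => _ _ ?; lia.
Qed.

Lemma lang_depth_bin (A : finType) (I I1 I2 : form A) la lb la' lb' l l' :
  vars I = vars I1 ++ vars I2 -> agts I = agts I1 :|: agts I2 ->
  depth I = maxn (depth I1) (depth I2) ->
  lang I1 la -> lang I2 lb -> lang I1 la' -> lang I2 lb' ->
  depth I1 <= md la -> depth I2 <= md lb ->
  sublang la l -> sublang lb l -> sublang la' l' -> sublang lb' l' ->
  lang I l /\ lang I l' /\ depth I <= md l.
Proof.
move=> ev ea ed h1 h2 h3 h4 d1 d2 s1 s2 s3 s4.
have g1 := lang_mono h1 s1; have g2 := lang_mono h2 s2.
have g3 := lang_mono h3 s3; have g4 := lang_mono h4 s4.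
split; first by apply: (lang_bin (I1:=I1) (I2:=I2)) => //; rewrite ?ev ?ea.
split; first by apply: (lang_bin (I1:=I1) (I2:=I2)) => //; rewrite ?ev ?ea.
case: s1 => _ _ ?; case: s2 => _ _ ?; rewrite ed; lia.
Qed.

Lemma pmid1 (T : Type) (a : T) D D1 D2 :
  Permutation D (D1 ++ D2) -> Permutation (a :: D) (D1 ++ a :: D2).
Proof. move=> h; apply: Permutation_trans (perm_skip a h) _; exact: perm_mid. Qed.
Lemma pmid2 (T : Type) (a b : T) D D1 D2 :
  Permutation D (D1 ++ D2) -> Permutation (a :: b :: D) (D1 ++ a :: b :: D2).
Proof.
move=> h; apply: Permutation_trans (perm_skip a (pmid1 b h)) _; exact: perm_mid.
Qed.
Lemma pskip2 (T : Type) (a b : T) D D1 D2 :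
  Permutation D (D1 ++ D2) -> Permutation (a :: b :: D) ((a :: b :: D1) ++ D2).
Proof. by move=> h; do 2 apply: perm_skip. Qed.

Ltac vtac := let M := fresh "M" in let w := fresh "w" in let hM := fresh "hM" in
  move=> M w hM /=;
  repeat match goal with H : valid _ _ _ |- _ => move: (H M w hM) => /=; clear H end;
  first [tauto | apply: NNPP; tauto].

Ltac psym e := exact: (Permutation_sym e).
Ltac prefl := exact: Permutation_refl.

Definition Bx (A : finType) (p : grp A * form A) : form A := Box p.1 p.2.
Definition bodies (A : finType) (ps : seq (grp A * form A)) := [seq p.2 | p <- ps].
Definition gU (A : finType) (ps : seq (grp A * form A)) : {set A} :=
  foldr (fun p S => val p.1 :|: S) set0 ps.

Lemma grp_ex (A : finType) (H : grp A) : exists a, a \in val H.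
Proof. by case: H => H /= /set0Pn [a ha]; exists a. Qed.

Lemma gU_ne (A : finType) (q : grp A * form A) r : gU (q :: r) != set0.
Proof.
have [a ha] := grp_ex q.1; apply/set0Pn; exists a; by rewrite /= inE ha.
Qed.

Lemma gU_in (A : finType) (ps : seq (grp A * form A)) (p : grp A * form A) : List.In p ps -> val p.1 \subset gU ps.
Proof.
elim: ps => [|q ps IH] //= [->|h]; first exact: subsetUl.
apply: subset_trans (IH h) _; exact: subsetUr.
Qed.

Lemma gU_sub (A : finType) (ps : seq (grp A * form A)) (G : {set A}) :
  (forall p : grp A * form A, List.In p ps -> val p.1 \subset G) -> gU ps \subset G.
Proof.
elim: ps => [|q ps IH] h /=; first exact: sub0set.
by rewrite subUset h /=; [rewrite IH // => p hp; apply: h; right| left].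
Qed.

Lemma gU_AS (A : finType) (ps : seq (grp A * form A)) : gU ps \subset AS (map (@Bx A) ps).
Proof.
elim: ps => [|q ps IH] /=; first exact: sub0set.
rewrite /Bx /= subUset; apply/andP; split.
  by apply: subset_trans (subsetUl _ _) (subsetUl _ _).
exact: subset_trans IH (subsetUr _ _).
Qed.

Lemma Rg_mono (A : finType) (M : model A) (S S' : {set A}) w v :
  S' \subset S -> Rg M S w v -> Rg M S' w v.
Proof. by move=> /subsetP hs h a ha; apply: h; apply: hs. Qed.

Lemma box_bodies (A : finType) (M : model A) w v (ps : seq (grp A * form A)) (S : {set A}) :
  allT M w (map (@Bx A) ps) -> (forall p : grp A * form A, List.In p ps -> val p.1 \subset S) ->
  Rg M S w v -> allT M v (bodies ps).
Proof.
elim: ps => [|q ps IH] //= [hq hr] hs hR; split.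
  by apply: hq; apply: Rg_mono hR; apply: hs; left.
by apply: IH => // p hp; apply: hs; right.
Qed.

Lemma md_Bx (A : finType) (ps : seq (grp A * form A)) :
  md (map (@Bx A) ps) = if ps is [::] then 0 else (md (bodies ps)).+1.
Proof.
elim: ps => [|q ps IH] //=; rewrite IH; case: ps {IH} => [|r ps] /=; lia.
Qed.

Lemma sublang_bodies (A : finType) (ps : seq (grp A * form A)) l :
  sublang (bodies ps ++ l) (map (@Bx A) ps ++ l).
Proof.
split.
- rewrite !VS_cat => x; rewrite !mem_cat; case/orP=> [h|->]; last by rewrite orbT.
  apply/orP; left; elim: ps h => [|q ps IH] //=; rewrite !mem_cat.
  by case/orP=> [->|/IH ->] //; rewrite orbT.
- rewrite !AS_cat; apply: setSU; elim: ps => [|q ps IH] /=; first exact: sub0set.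
  rewrite /Bx /= -setUA; apply: subset_trans _ (subsetUr (val q.1) _); exact: setUS.
- rewrite !md_cat md_Bx; case: ps => [|q ps] //=; lia.
Qed.

Lemma sublang_trans (A : finType) (l1 l2 l3 : seq (form A)) :
  sublang l1 l2 -> sublang l2 l3 -> sublang l1 l3.
Proof.
move=> [a1 b1 c1] [a2 b2 c2]; split; first by move=> x /a1 /a2.
  exact: subset_trans b2.
lia.
Qed.

Lemma lang_box (A : finType) (H : grp A) (J : form A) l :
  lang J l -> val H \subset AS l -> lang (Box H J) l.
Proof. by move=> [h1 h2] h3; split=> //=; rewrite subUset h2 h3. Qed.

Lemma ex_not_box (A : finType) (M : model A) w (H : grp A) J :
  ~ sat M w (Box H (Neg J)) -> exists v, Rg M (val H) w v /\ sat M v J.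
Proof.
move=> h; apply: NNPP => hn; apply: h => v hv hJ; apply: hn; by exists v.
Qed.

Lemma In_bodies_pair (A : finType) (Ga : grp A) (g : seq (form A)) :
  bodies [seq (Ga, x) | x <- g] = g /\ map (@Bx A) [seq (Ga, x) | x <- g] = [seq Box Ga x | x <- g].
Proof. by elim: g => [|x g [h1 h2]] //=; rewrite h1 h2. Qed.

Lemma AS_In (A : finType) (f : form A) l : List.In f l -> agts f \subset AS l.
Proof. by move=> h; case: (lang_In h). Qed.

Lemma sublang_AS (A : finType) (l l' : seq (form A)) : sublang l l' -> AS l \subset AS l'.
Proof. by case. Qed.

Lemma boxes_bodies (A : finType) (M : model A) x u (Ga : grp A) g :
  allT M x [seq Box Ga y | y <- g] -> Rg M (val Ga) x u -> allT M u g.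
Proof. elim: g => [|y g IH] //= [h1 h2] hu; split; [exact: h1 | exact: IH]. Qed.

Lemma sublang_boxes (A : finType) (Ga : grp A) g l :
  sublang (g ++ l) ([seq Box Ga y | y <- g] ++ l).
Proof.
have [h1 h2] := In_bodies_pair Ga g.
have := sublang_bodies [seq (Ga, x) | x <- g] l; by rewrite h1 h2.
Qed.

Lemma md_boxes (A : finType) (Ga : grp A) (g : seq (form A)) :
  md [seq Box Ga y | y <- g] = if g is [::] then 0 else (md g).+1.
Proof.
have [h1 h2] := In_bodies_pair Ga g.
by rewrite -h2 md_Bx h1; case: g {h1 h2}.
Qed.

Lemma craig_prop (A : finType) L (G D : seq (form A)) : derivable L G D ->
  forall G1 G2 D1 D2, Permutation G (G1 ++ G2) -> Permutation D (D1 ++ D2) ->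
  exists I, Interp L I G1 D1 G2 D2.
Proof.
elim=> {G D}.
- move=> G D G' D' _ IH pG pD G1 G2 D1 D2 h1 h2.
  exact: IH (Permutation_trans pG h1) (Permutation_trans pD h2).
- move=> p G D G1 G2 D1 D2 h1 h2.
  case: (perm_cons_split h1) => [[G1' [e1 _]]|[G2' [e1 _]]];
  case: (perm_cons_split h2) => [[D1' [e2 _]]|[D2' [e2 _]]].
  + exists Bot; apply: (Interp_perm (Permutation_sym e1) (Permutation_sym e2)
       (Permutation_refl _) (Permutation_refl _)).
    apply: Interp_Bot; vtac.
  + exists (Var A p); apply: (Interp_perm (Permutation_sym e1) (Permutation_refl _)
       (Permutation_refl _) (Permutation_sym e2)).
    apply: mkInterp => //; try vtac.
    * by apply: lang_In; left.
    * by apply: lang_In; apply/In_cat; right; left.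
  + exists (Neg (Var A p)); apply: (Interp_perm (Permutation_refl _) (Permutation_sym e2)
       (Permutation_sym e1) (Permutation_refl _)).
    apply: mkInterp => //; try vtac.
    * by apply: (@lang_In _ (Var A p)); apply/In_cat; right; left.
    * by apply: (@lang_In _ (Var A p)); left.
  + exists (Top A); apply: (Interp_perm (Permutation_refl _) (Permutation_refl _)
       (Permutation_sym e1) (Permutation_sym e2)).
    apply: Interp_Top; vtac.
- move=> G D G1 G2 D1 D2 h1 h2.
  case: (perm_cons_split h1) => [[G1' [e1 _]]|[G2' [e1 _]]].
  + exists Bot; apply: (Interp_perm (Permutation_sym e1) (Permutation_refl _)
       (Permutation_refl _) (Permutation_refl _)).
    apply: Interp_Bot; vtac.
  + exists (Top A); apply: (Interp_perm (Permutation_refl _) (Permutation_refl _)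
       (Permutation_sym e1) (Permutation_refl _)).
    apply: Interp_Top; vtac.
- move=> G D a1 a2 _ IH1 _ IH2 G1 G2 D1 D2 h1 h2.
  case: (perm_cons_split h2) => [[D1' [e eD]]|[D2' [e eD]]].
  + have [I1 /InterpE [v1 [w1 [l1 [m1 d1]]]]] := IH1 G1 G2 (a1 :: D1') D2 h1 (perm_skip a1 eD).
    have [I2 /InterpE [v2 [w2 [l2 [m2 d2]]]]] := IH2 G1 G2 (a2 :: D1') D2 h1 (perm_skip a2 eD).
    exists (Or I1 I2); apply: (Interp_perm (Permutation_refl _) (Permutation_sym e)
       (Permutation_refl _) (Permutation_refl _)).
    have [ll [mm dd]] := lang_depth_bin (I:=Or I1 I2) erefl erefl erefl l1 l2 m1 m2 d1 d2
      (l:=G1 ++ And a1 a2 :: D1') (l':=G2 ++ D2) ltac:(sltac) ltac:(sltac) ltac:(sltac) ltac:(sltac).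
    apply: mkInterp => //; vtac.
  + have [I1 /InterpE [v1 [w1 [l1 [m1 d1]]]]] := IH1 G1 G2 D1 (a1 :: D2') h1 (pmid1 a1 eD).
    have [I2 /InterpE [v2 [w2 [l2 [m2 d2]]]]] := IH2 G1 G2 D1 (a2 :: D2') h1 (pmid1 a2 eD).
    exists (And I1 I2); apply: (Interp_perm (Permutation_refl _) (Permutation_refl _)
       (Permutation_refl _) (Permutation_sym e)).
    have [ll [mm dd]] := lang_depth_bin (I:=And I1 I2) erefl erefl erefl l1 l2 m1 m2 d1 d2
      (l:=G1 ++ D1) (l':=G2 ++ And a1 a2 :: D2') ltac:(sltac) ltac:(sltac) ltac:(sltac) ltac:(sltac).
    apply: mkInterp => //; vtac.

- move=> G D a1 a2 _ IH G1 G2 D1 D2 h1 h2.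
  case: (perm_cons_split h1) => [[G1' [e eG]]|[G2' [e eG]]].
  + have [I /InterpE [v [w [l [m d]]]]] := IH (a1 :: a2 :: G1') G2 D1 D2 (pskip2 a1 a2 eG) h2.
    exists I; apply: (Interp_perm (Permutation_sym e) (Permutation_refl _)
       (Permutation_refl _) (Permutation_refl _)).
    have [ll [mm dd]] := lang_depth_un l m d (l:=And a1 a2 :: G1' ++ D1) (l':=G2 ++ D2)
      ltac:(sltac) ltac:(sltac).
    apply: mkInterp => //; vtac.
  + have [I /InterpE [v [w [l [m d]]]]] := IH G1 (a1 :: a2 :: G2') D1 D2 (pmid2 a1 a2 eG) h2.
    exists I; apply: (Interp_perm (Permutation_refl _) (Permutation_refl _)
       (Permutation_sym e) (Permutation_refl _)).
    have [ll [mm dd]] := lang_depth_un l m d (l:=G1 ++ D1) (l':=And a1 a2 :: G2' ++ D2)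
      ltac:(sltac) ltac:(sltac).
    apply: mkInterp => //; vtac.
- move=> G D a1 a2 _ IH G1 G2 D1 D2 h1 h2.
  case: (perm_cons_split h2) => [[D1' [e eD]]|[D2' [e eD]]].
  + have [I /InterpE [v [w [l [m d]]]]] := IH G1 G2 (a1 :: a2 :: D1') D2 h1 (pskip2 a1 a2 eD).
    exists I; apply: (Interp_perm (Permutation_refl _) (Permutation_sym e)
       (Permutation_refl _) (Permutation_refl _)).
    have [ll [mm dd]] := lang_depth_un l m d (l:=G1 ++ Or a1 a2 :: D1') (l':=G2 ++ D2)
      ltac:(sltac) ltac:(sltac).
    apply: mkInterp => //; vtac.
  + have [I /InterpE [v [w [l [m d]]]]] := IH G1 G2 D1 (a1 :: a2 :: D2') h1 (pmid2 a1 a2 eD).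
    exists I; apply: (Interp_perm (Permutation_refl _) (Permutation_refl _)
       (Permutation_refl _) (Permutation_sym e)).
    have [ll [mm dd]] := lang_depth_un l m d (l:=G1 ++ D1) (l':=G2 ++ Or a1 a2 :: D2')
      ltac:(sltac) ltac:(sltac).
    apply: mkInterp => //; vtac.
- move=> G D a1 a2 _ IH1 _ IH2 G1 G2 D1 D2 h1 h2.
  case: (perm_cons_split h1) => [[G1' [e eG]]|[G2' [e eG]]].
  + have [I1 /InterpE [v1 [w1 [l1 [m1 d1]]]]] := IH1 (a1 :: G1') G2 D1 D2 (perm_skip a1 eG) h2.
    have [I2 /InterpE [v2 [w2 [l2 [m2 d2]]]]] := IH2 (a2 :: G1') G2 D1 D2 (perm_skip a2 eG) h2.
    exists (Or I1 I2); apply: (Interp_perm (Permutation_sym e) (Permutation_refl _)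
       (Permutation_refl _) (Permutation_refl _)).
    have [ll [mm dd]] := lang_depth_bin (I:=Or I1 I2) erefl erefl erefl l1 l2 m1 m2 d1 d2
      (l:=Or a1 a2 :: G1' ++ D1) (l':=G2 ++ D2) ltac:(sltac) ltac:(sltac) ltac:(sltac) ltac:(sltac).
    apply: mkInterp => //; vtac.
  + have [I1 /InterpE [v1 [w1 [l1 [m1 d1]]]]] := IH1 G1 (a1 :: G2') D1 D2 (pmid1 a1 eG) h2.
    have [I2 /InterpE [v2 [w2 [l2 [m2 d2]]]]] := IH2 G1 (a2 :: G2') D1 D2 (pmid1 a2 eG) h2.
    exists (And I1 I2); apply: (Interp_perm (Permutation_refl _) (Permutation_refl _)
       (Permutation_sym e) (Permutation_refl _)).
    have [ll [mm dd]] := lang_depth_bin (I:=And I1 I2) erefl erefl erefl l1 l2 m1 m2 d1 d2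
      (l:=G1 ++ D1) (l':=Or a1 a2 :: G2' ++ D2) ltac:(sltac) ltac:(sltac) ltac:(sltac) ltac:(sltac).
    apply: mkInterp => //; vtac.
- move=> G D a1 a2 _ IH G1 G2 D1 D2 h1 h2.
  case: (perm_cons_split h2) => [[D1' [e eD]]|[D2' [e eD]]].
  + have [I /InterpE [v [w [l [m d]]]]] := IH (a1 :: G1) G2 (a2 :: D1') D2 (perm_skip a1 h1) (perm_skip a2 eD).
    exists I; apply: (Interp_perm (Permutation_refl _) (Permutation_sym e)
       (Permutation_refl _) (Permutation_refl _)).
    have [ll [mm dd]] := lang_depth_un l m d (l:=G1 ++ Imp a1 a2 :: D1') (l':=G2 ++ D2)
      ltac:(sltac) ltac:(sltac).
    apply: mkInterp => //; vtac.
  + have [I /InterpE [v [w [l [m d]]]]] := IH G1 (a1 :: G2) D1 (a2 :: D2') (pmid1 a1 h1) (pmid1 a2 eD).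
    exists I; apply: (Interp_perm (Permutation_refl _) (Permutation_refl _)
       (Permutation_refl _) (Permutation_sym e)).
    have [ll [mm dd]] := lang_depth_un l m d (l:=G1 ++ D1) (l':=G2 ++ Imp a1 a2 :: D2')
      ltac:(sltac) ltac:(sltac).
    apply: mkInterp => //; vtac.
- move=> G D a1 a2 _ IH1 _ IH2 G1 G2 D1 D2 h1 h2.
  case: (perm_cons_split h1) => [[G1' [e eG]]|[G2' [e eG]]].
  + have [I1 /InterpE [v1 [w1 [l1 [m1 d1]]]]] := IH1 G1' G2 (a1 :: D1) D2 eG (perm_skip a1 h2).
    have [I2 /InterpE [v2 [w2 [l2 [m2 d2]]]]] := IH2 (a2 :: G1') G2 D1 D2 (perm_skip a2 eG) h2.
    exists (Or I1 I2); apply: (Interp_perm (Permutation_sym e) (Permutation_refl _)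
       (Permutation_refl _) (Permutation_refl _)).
    have [ll [mm dd]] := lang_depth_bin (I:=Or I1 I2) erefl erefl erefl l1 l2 m1 m2 d1 d2
      (l:=Imp a1 a2 :: G1' ++ D1) (l':=G2 ++ D2) ltac:(sltac) ltac:(sltac) ltac:(sltac) ltac:(sltac).
    apply: mkInterp => //; vtac.
  + have [I1 /InterpE [v1 [w1 [l1 [m1 d1]]]]] := IH1 G1 G2' D1 (a1 :: D2) eG (pmid1 a1 h2).
    have [I2 /InterpE [v2 [w2 [l2 [m2 d2]]]]] := IH2 G1 (a2 :: G2') D1 D2 (pmid1 a2 eG) h2.
    exists (And I1 I2); apply: (Interp_perm (Permutation_refl _) (Permutation_refl _)
       (Permutation_sym e) (Permutation_refl _)).
    have [ll [mm dd]] := lang_depth_bin (I:=And I1 I2) erefl erefl erefl l1 l2 m1 m2 d1 d2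
      (l:=G1 ++ D1) (l':=Imp a1 a2 :: G2' ++ D2) ltac:(sltac) ltac:(sltac) ltac:(sltac) ltac:(sltac).
    apply: mkInterp => //; vtac.
- move=> G D a _ IH G1 G2 D1 D2 h1 h2.
  case: (perm_cons_split h2) => [[D1' [e eD]]|[D2' [e eD]]].
  + have [I /InterpE [v [w [l [m d]]]]] := IH (a :: G1) G2 D1' D2 (perm_skip a h1) eD.
    exists I; apply: (Interp_perm (Permutation_refl _) (Permutation_sym e)
       (Permutation_refl _) (Permutation_refl _)).
    have [ll [mm dd]] := lang_depth_un l m d (l:=G1 ++ Neg a :: D1') (l':=G2 ++ D2)
      ltac:(sltac) ltac:(sltac).
    apply: mkInterp => //; vtac.
  + have [I /InterpE [v [w [l [m d]]]]] := IH G1 (a :: G2) D1 D2' (pmid1 a h1) eD.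
    exists I; apply: (Interp_perm (Permutation_refl _) (Permutation_refl _)
       (Permutation_refl _) (Permutation_sym e)).
    have [ll [mm dd]] := lang_depth_un l m d (l:=G1 ++ D1) (l':=G2 ++ Neg a :: D2')
      ltac:(sltac) ltac:(sltac).
    apply: mkInterp => //; vtac.
- move=> G D a _ IH G1 G2 D1 D2 h1 h2.
  case: (perm_cons_split h1) => [[G1' [e eG]]|[G2' [e eG]]].
  + have [I /InterpE [v [w [l [m d]]]]] := IH G1' G2 (a :: D1) D2 eG (perm_skip a h2).
    exists I; apply: (Interp_perm (Permutation_sym e) (Permutation_refl _)
       (Permutation_refl _) (Permutation_refl _)).
    have [ll [mm dd]] := lang_depth_un l m d (l:=Neg a :: G1' ++ D1) (l':=G2 ++ D2)
      ltac:(sltac) ltac:(sltac).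
    apply: mkInterp => //; vtac.
  + have [I /InterpE [v [w [l [m d]]]]] := IH G1 G2' D1 (a :: D2) eG (pmid1 a h2).
    exists I; apply: (Interp_perm (Permutation_refl _) (Permutation_refl _)
       (Permutation_sym e) (Permutation_refl _)).
    have [ll [mm dd]] := lang_depth_un l m d (l:=G1 ++ D1) (l':=Neg a :: G2' ++ D2)
      ltac:(sltac) ltac:(sltac).
    apply: mkInterp => //; vtac.

- move=> ps G b Sig Om _ IH hps _ _ G1 G2 D1 D2 h1 h2.
  have [s1 [s2 [m1 [m2 [es [em [e1 e2]]]]]]] := perm_app_split h1.
  have em' : Permutation (map (@Bx A) ps) (m1 ++ m2) := em.
  have [ps1 [ps2 [eps [E1 E2]]]] := perm_map_split em'. subst m1 m2.
  have hps1 : forall p, List.In p ps1 -> val p.1 \subset val G.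
    by move=> p hp; apply: hps; apply: (perm_In (Permutation_sym eps)); apply/In_cat; left.
  have hps2 : forall p, List.In p ps2 -> val p.1 \subset val G.
    by move=> p hp; apply: hps; apply: (perm_In (Permutation_sym eps)); apply/In_cat; right.
  have eb : Permutation (bodies ps) (bodies ps1 ++ bodies ps2).
    by rewrite /bodies -map_cat; apply: Permutation_map.
  case: (perm_cons_split h2) => [[D1' [e eD]]|[D2' [e eD]]].
  + have [J /InterpE [v [w [l [m d]]]]] := IH (bodies ps1) (bodies ps2) [:: b] [::] eb (Permutation_refl _).
    suff [I hI] : exists I, Interp L I (s1 ++ map (@Bx A) ps1) (Box G b :: D1') (s2 ++ map (@Bx A) ps2) D2.
      by exists I; apply: (Interp_perm (Permutation_sym e1) (Permutation_sym e) (Permutation_sym e2) (Permutation_refl _) hI).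
    destruct ps2 as [|q r].
    * exists Bot; apply: Interp_Bot.
      move=> M x hM hG; rewrite allT_cat in hG; case: hG => _ hG /=; left.
      move=> u hu; have hb := box_bodies hG hps1 hu.
      have := v M u hM hb; have := w M u hM; rewrite /=; tauto.
    * pose H : grp A := exist _ (gU (q :: r)) (gU_ne q r).
      have hHG : val H \subset val G := gU_sub hps2.
      exists (Neg (Box H (Neg J))); apply: mkInterp.
      -- move=> M x hM hG; rewrite allT_cat in hG; case: hG => _ hG /=.
         case: (classic (sat M x (Box H (Neg J)))) => hc; [right; left | by left].
         move=> u hu; have hb := box_bodies hG hps1 hu.
         have hJ : ~ sat M u J by apply: hc; apply: Rg_mono hu.
         have := v M u hM hb; rewrite /=; tauto.
      -- move=> M x hM /= [hI hG]; rewrite allT_cat in hG; case: hG => _ hG.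
         have [u [hu hJ]] := @ex_not_box _ M x H J hI.
         have hb := @box_bodies _ M x u (q :: r) (val H) hG (fun p hp => @gU_in _ (q :: r) p hp) hu.
         have := w M u hM; rewrite /=; tauto.
      -- apply: lang_box.
         ++ apply: lang_mono l _; apply: sublang_trans (sublang_bodies ps1 [:: b]) _; sltac.
         ++ apply: subset_trans hHG _; apply: subset_trans (subsetUl (val G) (agts b)) _.
            apply: (AS_In (f := Box G b)); by apply/In_cat; right; left.
      -- apply: lang_box.
         ++ apply: lang_mono m _; apply: sublang_trans (sublang_bodies (q :: r) [::]) _; sltac.
         ++ apply: subset_trans (gU_AS (q :: r)) _; apply: sublang_AS; sltac.
      -- move: d; rewrite /= !md_cat /= md_Bx; case: (ps1) => [|??] /=; lia.
  + have [J /InterpE [v [w [l [m d]]]]] := IH (bodies ps1) (bodies ps2) [::] [:: b] eb (Permutation_refl _).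
    suff [I hI] : exists I, Interp L I (s1 ++ map (@Bx A) ps1) D1 (s2 ++ map (@Bx A) ps2) (Box G b :: D2').
      by exists I; apply: (Interp_perm (Permutation_sym e1) (Permutation_refl _) (Permutation_sym e2) (Permutation_sym e) hI).
    destruct ps1 as [|q r].
    * exists (Top A); apply: Interp_Top.
      move=> M x hM hG; rewrite allT_cat in hG; case: hG => _ hG /=; left.
      move=> u hu; have hb := box_bodies hG hps2 hu.
      have := v M u hM I; have := w M u hM; rewrite /=; tauto.
    * pose H : grp A := exist _ (gU (q :: r)) (gU_ne q r).
      have hHG : val H \subset val G := gU_sub hps1.
      exists (Box H J); apply: mkInterp.
      -- move=> M x hM hG; rewrite allT_cat in hG; case: hG => _ hG /=; left.
         move=> u hu; have hb := @box_bodies _ M x u (q :: r) (val H) hG (fun p hp => @gU_in _ (q :: r) p hp) hu.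
         have := v M u hM hb; rewrite /=; tauto.
      -- move=> M x hM /= [hI hG]; rewrite allT_cat in hG; case: hG => _ hG; left.
         move=> u hu; have hb := box_bodies hG hps2 hu.
         have hJ := hI u (Rg_mono hHG hu).
         have := w M u hM; rewrite /=; tauto.
      -- apply: lang_box.
         ++ apply: lang_mono l _; apply: sublang_trans (sublang_bodies (q :: r) [::]) _; sltac.
         ++ apply: subset_trans (gU_AS (q :: r)) _; apply: sublang_AS; sltac.
      -- apply: lang_box.
         ++ apply: lang_mono m _; apply: sublang_trans (sublang_bodies ps2 [:: b]) _; sltac.
         ++ apply: subset_trans hHG _; apply: subset_trans (subsetUl (val G) (agts b)) _.
            apply: (AS_In (f := Box G b)); by apply/In_cat; right; left.
      -- move: d; rewrite !md_cat md_Bx /=; lia.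

- move=> a Ga Gm Sig Om hL hGa _ _ IH _ _ G1 G2 D1 D2 h1 h2; subst L.
  have [s1 [s2 [m1 [m2 [es [em [e1 e2]]]]]]] := perm_app_split h1.
  have [g1 [g2 [eg [E1 E2]]]] := perm_map_split em; subst m1 m2.
  have [J /InterpE [v [w [l [m d]]]]] := IH g1 g2 [::] [::] eg (Permutation_refl _).
  have ser : forall (M : model A) x, cls LKD M -> exists u, Rg M (val Ga) x u.
    move=> M x hM; have [u hu] := hM a x; exists u => y; rewrite hGa inE => /eqP -> //.
  suff [I hI] : exists I, Interp LKD I (s1 ++ [seq Box Ga y | y <- g1]) D1
                                      (s2 ++ [seq Box Ga y | y <- g2]) D2.
    by exists I; apply: (Interp_perm (Permutation_sym e1) (Permutation_refl _) (Permutation_sym e2) (Permutation_refl _) hI).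
  destruct g1 as [|x1 r1].
  + exists (Top A); apply: Interp_Top.
    move=> M x hM hG; rewrite allT_cat in hG; case: hG => _ hG.
    have [u hu] := ser M x hM; have hb := boxes_bodies hG hu.
    have := v M u hM I; have := w M u hM; rewrite /=; tauto.
  destruct g2 as [|x2 r2].
  + exists Bot; apply: Interp_Bot.
    move=> M x hM hG; rewrite allT_cat in hG; case: hG => _ hG.
    have [u hu] := ser M x hM; have hb := boxes_bodies hG hu.
    have := v M u hM hb; have := w M u hM; rewrite /=; tauto.
  + exists (Box Ga J); apply: mkInterp.
    * move=> M x hM hG; rewrite allT_cat in hG; case: hG => _ hG /=; left.
      move=> u hu; have hb := boxes_bodies hG hu.
      have := v M u hM hb; rewrite /=; tauto.
    * move=> M x hM /= [hI hG]; rewrite allT_cat in hG; case: hG => _ hG.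
      have [u hu] := ser M x hM; have hb := @boxes_bodies _ M x u Ga (x2 :: r2) hG hu.
      have := hI u hu; have := w M u hM; rewrite /=; tauto.
    * apply: lang_box.
      -- apply: lang_mono l _; apply: sublang_trans (sublang_boxes Ga (x1 :: r1) [::]) _; sltac.
      -- apply: subset_trans (subsetUl (val Ga) (agts x1)) _.
         apply: (AS_In (f := Box Ga x1)); by apply/In_cat; left; apply/In_cat; right; left.
    * apply: lang_box.
      -- apply: lang_mono m _; apply: sublang_trans (sublang_boxes Ga (x2 :: r2) [::]) _; sltac.
      -- apply: subset_trans (subsetUl (val Ga) (agts x2)) _.
         apply: (AS_In (f := Box Ga x2)); by apply/In_cat; left; apply/In_cat; right; left.
    * move: d; rewrite !md_cat md_boxes /=; lia.
- move=> G D H a hL _ IH G1 G2 D1 D2 h1 h2; subst L.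
  case: (perm_cons_split h1) => [[G1' [e eG]]|[G2' [e eG]]].
  + have [I /InterpE [v [w [l [m d]]]]] := IH (Box H a :: a :: G1') G2 D1 D2 (pskip2 _ _ eG) h2.
    exists I; apply: (Interp_perm (Permutation_sym e) (Permutation_refl _)
       (Permutation_refl _) (Permutation_refl _)).
    have [ll [mm dd]] := lang_depth_un l m d (l:=Box H a :: G1' ++ D1) (l':=G2 ++ D2)
      ltac:(sltac) ltac:(sltac).
    apply: mkInterp => //.
    move=> M x hM /= [hb hG]; apply: v => //; split=> //; split=> //.
    by apply: hb => y _; apply: hM.
  + have [I /InterpE [v [w [l [m d]]]]] := IH G1 (Box H a :: a :: G2') D1 D2 (pmid2 _ _ eG) h2.
    exists I; apply: (Interp_perm (Permutation_refl _) (Permutation_refl _)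
       (Permutation_sym e) (Permutation_refl _)).
    have [ll [mm dd]] := lang_depth_un l m d (l:=G1 ++ D1) (l':=Box H a :: G2' ++ D2)
      ltac:(sltac) ltac:(sltac).
    apply: mkInterp => //.
    move=> M x hM /= [hI [hb hG]]; apply: w => //; split=> //; split=> //; split=> //.
    by apply: hb => y _; apply: hM.
Qed.


Definition isVar (A : finType) (f : form A) := exists x, f = Var A x.

Fixpoint wt (A : finType) (f : form A) : nat :=
  match f with
  | Var _ | Bot => 1
  | And a b | Or a b | Imp a b => wt a + wt b + 1
  | Neg a => wt a + 1
  | Box _ a => (wt a).*2 + 2
  end.
Definition sumw (A : finType) (l : seq (form A)) := foldr (fun f n => wt f + n) 0 l.

Lemma wt_pos (A : finType) (f : form A) : 0 < wt f.
Proof. case: f => //= *; lia. Qed.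

Definition CM (A : finType) L (G At : seq (form A)) (P : seq (grp A * form A)) D Dt :=
  exists M w, cls L M /\ (L <> LKT -> forall a, ~ Rel M a w w) /\ allT M w (G ++ At) /\
   (forall p, List.In p P -> forall v, v <> w -> Rg M (val p.1) w v -> sat M v p.2) /\
   ~ exT M w (D ++ Dt).

Definition dM (A : finType) : model A := Model (fun _ _ _ => True) (fun _ _ => False).
Lemma cls_dM (A : finType) L : cls L (dM A).
Proof. case: L => //= a w; by exists w. Qed.

Definition child (A : finType) := ((model A * seq nat) * {set A})%type.
Definition dch (A : finType) : child A := ((dM A, [::]), set0).
Definition cnth (A : finType) (ch : seq (child A)) k := List.nth k ch (dch A).

Definition comb (A : finType) L (At : seq (form A)) (ch : seq (child A)) : model A :=
  Model (fun a u v => match u, v with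
   | [::], [::] => L = LKT
   | [::], k :: p => a \in (cnth ch k).2 /\ p = (cnth ch k).1.2
   | k :: p, k' :: q => k = k' /\ Rel (cnth ch k).1.1 a p q
   | _ :: _, [::] => False end)
  (fun x u => match u with [::] => List.In (Var A x) At | k :: p => Val (cnth ch k).1.1 x p end).

Lemma comb_truth (A : finType) L At (ch : seq (child A)) (f : form A) :
  forall k p, sat (comb L At ch) (k :: p) f <-> sat (cnth ch k).1.1 p f.
Proof.
elim: f => [x||a IHa b IHb|a IHa b IHb|a IHa b IHb|a IHa|H a IHa] k p //=.
- by rewrite IHa IHb.
- by rewrite IHa IHb.
- by rewrite IHa IHb.
- by rewrite IHa.
- split.
  + move=> h q hq; apply/IHa; apply: h => y hy /=; split=> //; exact: hq.
  + move=> h [|k' q] hv; have [a0 ha0] := grp_ex H; first by case: (hv a0 ha0).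
    have [ek _] := hv a0 ha0; subst k'.
    apply/IHa; apply: h => y hy; exact: (hv y hy).2.
Qed.

Lemma cls_cnth (A : finType) L (ch : seq (child A)) k :
  (forall c, List.In c ch -> cls L c.1.1) -> cls L (cnth ch k).1.1.
Proof.
move=> h; rewrite /cnth; case: (nth_in_or_default k ch (dch A)) => [hi|->].
  exact: h.
exact: cls_dM.
Qed.

Lemma combine (A : finType) L (At : seq (form A)) (P : seq (grp A * form A)) Dt (ch : seq (child A)) :
  (forall f, List.In f At -> isVar f) -> (forall f, List.In f Dt -> omegaOK f) ->
  (forall c, List.In c ch -> cls L c.1.1) ->
  (forall c, List.In c ch -> forall p, List.In p P -> val p.1 \subset c.2 -> sat c.1.1 c.1.2 p.2) ->
  (forall G b, List.In (Box G b) Dt -> exists c, List.In c ch /\ c.2 = val G /\ ~ sat c.1.1 c.1.2 b) ->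
  (L = LKD -> forall a, exists c, List.In c ch /\ a \in c.2) ->
  (forall x, List.In (Var A x) At -> List.In (Var A x) Dt -> False) ->
  CM L [::] At P [::] Dt.
Proof.
move=> hA hD h1 h2 h3 h4 h5.
exists (comb L At ch), [::]; split; [|split; [|split; [|split]]].
- case: L h1 h4 => h1 h4 //=.
  + move=> a [|k p].
    * have [c [hc ha]] := h4 erefl a.
      have [k [_ ek]] := In_nth ch c (dch A) hc.
      exists (k :: c.1.2); rewrite /cnth ek; by split.
    * have [q hq] := cls_cnth k h1 a p; by exists (k :: q).
  + move=> a [|k p] //=; split=> //; exact: (cls_cnth k h1 a p).
- by move=> hL a /= e.
- apply/allT_In => f /= hf; have [x ex] := hA f hf; subst f; exact: hf.
- move=> p hp [//|k q] _ hv.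
  have [a0 ha0] := grp_ex p.1.
  have [ha0' eq] := hv a0 ha0; subst q.
  apply/comb_truth.
  have hin : List.In (cnth ch k) ch.
    move: ha0'; rewrite /cnth; case: (nth_in_or_default k ch (dch A)) => [//|->].
    by rewrite /= inE.
  apply: (h2 _ hin p hp).
  apply/subsetP => y hy; exact: (hv y hy).1.
- move/exT_In => [f [hf hs]]; have := hD f hf.
  case: f hf hs => //=.
  + move=> x hf hs _; exact: h5 hs hf.
  + move=> G b hf hs _.
    have [c [hc [eS hb]]] := h3 G b hf.
    have [k [_ ek]] := In_nth ch c (dch A) hc.
    apply: hb; rewrite -ek; apply/(comb_truth L At ch b k).
    apply: hs => y hy /=; rewrite /cnth ek eS; by split.
Qed.

Lemma choice_list (T U : Type) (Q : T -> U -> Prop) (l : seq T) :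
  (forall x, List.In x l -> exists c, Q x c) ->
  exists cs, (forall x, List.In x l -> exists c, List.In c cs /\ Q x c) /\
             (forall c, List.In c cs -> exists x, List.In x l /\ Q x c).
Proof.
elim: l => [|x l IH] h; first by exists [::]; split.
have [c hc] := h x (or_introl erefl).
have [cs [h1 h2]] := IH (fun y hy => h y (or_intror hy)).
exists (c :: cs); split.
- move=> y [<-|hy]; first by exists c; split=> //; left.
  have [d [hd hq]] := h1 y hy; exists d; split=> //; by right.
- move=> d [<-|hd]; first by exists x; split=> //; left.
  have [y [hy hq]] := h2 d hd; exists y; split=> //; by right.
Qed.

Lemma sub1_eq (A : finType) (S : {set A}) a : S \subset [set a] -> S != set0 -> S = [set a].
Proof. by rewrite subset1 => /orP [/eqP ->|/eqP ->] //; rewrite eqxx. Qed.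

Lemma set1_ne0 (A : finType) (a : A) : [set a] != set0.
Proof. apply/set0Pn; exists a; exact: set11. Qed.

Lemma map_Bx_eq (A : finType) (a : A) (Ga : grp A) (P : seq (grp A * form A)) :
  val Ga = [set a] ->
  [seq Box Ga g | g <- bodies [seq p <- P | val p.1 == [set a]]] =
  map (@Bx A) [seq p <- P | val p.1 == [set a]].
Proof.
move=> hGa; elim: P => [|p P IH] //=.
case: ifP => h //=; rewrite IH; congr (_ :: _).
rewrite /Bx; congr (Box _ _); apply: val_inj; rewrite hGa; apply/eqP; by rewrite eq_sym h.
Qed.

Lemma perm_sel (A : finType) (At : seq (form A)) (P : seq (grp A * form A)) (q : pred (grp A * form A)) :
  Permutation ((At ++ map (@Bx A) (filter (predC q) P)) ++ map (@Bx A) (filter q P))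
              (At ++ map (@Bx A) P).
Proof.
rewrite -catA; apply: perm_cat; first exact: Permutation_refl.
rewrite -map_cat; apply: Permutation_map.
apply: Permutation_trans (perm_catC _ _) _; apply: Permutation_sym; exact: perm_filterC.
Qed.

Lemma mem_In (T : eqType) (x : T) (s : seq T) : x \in s -> List.In x s.
Proof. elim: s => [|y s IH] //=; rewrite in_cons => /orP [/eqP ->|/IH]; auto. Qed.

Lemma base (A : finType) L d (At : seq (form A)) (P : seq (grp A * form A)) Dt :
  (forall G D : seq (form A), G ++ D <> [::] -> (forall f, List.In f (G ++ D) -> depth f < d) ->
     derivable L G D \/ exists (M : model A) w, cls L M /\ allT M w G /\ ~ exT M w D) ->
  (forall f, List.In f At -> isVar f) -> (forall f, List.In f Dt -> omegaOK f) ->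
  md (At ++ map (@Bx A) P ++ Dt) <= d ->
  derivable L (At ++ map (@Bx A) P) Dt \/ CM L [::] At P [::] Dt.
Proof.
move=> IH hA hD hd.
case: (classic (exists x, List.In (Var A x) At /\ List.In (Var A x) Dt)) => [[x [h1 h2]]|n1].
  left.
  have [l1 p1] := @In_perm _ (Var A x) (At ++ map (@Bx A) P) (proj2 (In_cat _ _ _) (or_introl h1)).
  have [l2 p2] := In_perm h2.
  apply: (Exch _ (Permutation_sym p1) (Permutation_sym p2)); exact: Init.
pose subG (G : grp A) := fun p : grp A * form A => val p.1 \subset val G.
case: (classic (exists G b, List.In (Box G b) Dt /\ derivable L (bodies (filter (subG G) P)) [:: b]))
  => [[G [b [hin hder]]]|n2].
  left; have [Om pO] := In_perm hin.
  apply: (@Exch _ _ ((At ++ map (@Bx A) (filter (predC (subG G)) P)) ++ map (@Bx A) (filter (subG G) P))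
                    (Box G b :: Om)); [|exact: perm_sel|exact: Permutation_sym pO].
  apply: DK => //.
  - by move=> p /In_filter [_ h].
  - move=> f /In_cat [/hA [y ->] //|/In_map_iff [p [<- /In_filter [_ h]]]] /=; exact: h.
  - move=> f hf; apply: hD; apply: (perm_In (Permutation_sym pO)); by right.
pose eqa (a : A) := fun p : grp A * form A => val p.1 == [set a].
pose Gm a := bodies (filter (eqa a) P).
case: (classic (L = LKD /\ exists a, Gm a <> [::] /\ derivable L (Gm a) [::])) => [[hL [a [hne hder]]]|n3].
  left; pose Ga : grp A := exist _ [set a] (set1_ne0 a).
  apply: (@Exch _ _ ((At ++ map (@Bx A) (filter (predC (eqa a)) P)) ++ map (@Bx A) (filter (eqa a) P))
                    Dt); [|exact: perm_sel|exact: Permutation_refl].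
  rewrite -(@map_Bx_eq _ a Ga P erefl).
  apply: DD => //.
  - move=> f /In_cat [/hA [y ->] //|/In_map_iff [p [<- /In_filter [_ h]]]] /=; exact: h.
right.
have hd1 : forall p, List.In p P -> depth p.2 < d.
  move=> p hp; have h : List.In (Bx p) (At ++ map (@Bx A) P ++ Dt).
    apply/In_cat; right; apply/In_cat; left; apply/In_map_iff; by exists p.
  move: (md_In h) hd; rewrite /Bx /=; lia.
have hdD : forall f, List.In f Dt -> depth f <= d.
  move=> f hf; apply: leq_trans hd; apply: md_In; apply/In_cat; right; apply/In_cat; by right.
pose QR (f : form A) (c : child A) := match f with
  | Box G b => cls L c.1.1 /\ c.2 = val G /\ allT c.1.1 c.1.2 (bodies (filter (subG G) P)) /\
               ~ sat c.1.1 c.1.2 b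
  | _ => c = dch A end.
have hQ : forall f, List.In f Dt -> exists c, QR f c.
  move=> f hf; case E: f => [x||a b|a b|a b|a|G b]; try by exists (dch A).
  subst f.
  have h1 : bodies (filter (subG G) P) ++ [:: b] <> [::].
    by move=> e; have := f_equal size e; rewrite size_cat /=; lia.
  have h2 : forall f, List.In f (bodies (filter (subG G) P) ++ [:: b]) -> depth f < d.
    move=> g /In_cat [/In_map_iff [p [<- /In_filter [hp _]]]|[<-|[]]]; first exact: hd1.
    by have := hdD _ hf.
  case: (IH _ _ h1 h2) => [hder|[M [w [hM [hall hex]]]]].
    by exfalso; apply: n2; exists G, b.
  exists ((M, w), val G); split=> //; split=> //; split=> //.
  by move=> hb; apply: hex; left.
have [chR [hR1 hR2]] := choice_list hQ.
have [chA [hA1 hA2]] : exists chA : seq (child A),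
    (forall c, List.In c chA -> exists a, cls L c.1.1 /\ c.2 = [set a] /\ allT c.1.1 c.1.2 (Gm a)) /\
    (L = LKD -> forall a, exists c, List.In c chA /\ a \in c.2).
  case: (classic (L = LKD)) => hL; last by exists [::]; split.
  have hQA : forall a, List.In a (enum A) -> exists c : child A,
      cls L c.1.1 /\ c.2 = [set a] /\ allT c.1.1 c.1.2 (Gm a).
    move=> a _; case E: (Gm a) => [|g gs].
      exists ((dM A, [::]), [set a]); split; first exact: cls_dM.
      by split=> //; rewrite E.
    have h1 : Gm a ++ [::] <> [::] by rewrite E.
    have h2 : forall f, List.In f (Gm a ++ [::]) -> depth f < d.
      rewrite E cats0 -E => f /In_map_iff [p [<- /In_filter [hp _]]]; exact: hd1.
    case: (IH _ _ h1 h2) => [hder|[M [w [hM [hall hex]]]]].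
      exfalso; apply: n3; split=> //; exists a; split=> //; by rewrite E.
    exists ((M, w), [set a]); split=> //; split=> //; by rewrite -E.
  have [cs [c1 c2]] := choice_list hQA.
  exists cs; split.
    by move=> c hc; have [a [_ h]] := c2 c hc; exists a.
  move=> _ a; have ha : List.In a (enum A) by apply: mem_In; rewrite mem_enum.
  have [c [hc [_ [e _]]]] := c1 a ha; exists c; split=> //; rewrite e; exact: set11.
apply: (@combine _ _ _ _ _ (chR ++ chA)) => //.
- move=> c /In_cat [hc|hc].
    have [f [hf hq]] := hR2 c hc.
    case: f hf hq => [x||a b|a b|a b|a|G b] hf hq; try (rewrite /= in hq; rewrite hq; exact: cls_dM).
    by case: hq.
  by have [a [h _]] := hA1 c hc.
- move=> c /In_cat [hc|hc] p hp hsub.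
    have [a0 ha0] := grp_ex p.1.
    have [f [hf hq]] := hR2 c hc.
    case: f hf hq => [x||a b|a b|a b|a|G b] hf hq;
      try (rewrite /= in hq; subst c; move/subsetP: hsub => /(_ a0 ha0); by rewrite inE).
    case: hq => _ [e [hall _]]; move/allT_In: hall; apply.
    apply/In_map_iff; exists p; split=> //; apply/In_filter; split=> //.
    by rewrite /subG -e.
  have [a [_ [e hall]]] := hA1 c hc; move/allT_In: hall; apply.
  rewrite e in hsub; have ep := sub1_eq hsub (valP p.1).
  apply/In_map_iff; exists p; split=> //; apply/In_filter; split=> //.
  by rewrite /eqa ep eqxx.
- move=> G b hin; have [c [hc hq]] := hR1 _ hin; exists c; split; first by apply/In_cat; left.
  by case: hq => _ [e [_ h]].
- move=> hL a; have [c [hc ha]] := hA2 hL a; exists c; split=> //; apply/In_cat; by right.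
- move=> x h1 h2; apply: n1; by exists x.
Qed.

Lemma CM_mono (A : finType) L (G At G' At' D Dt D' Dt' : seq (form A)) P :
  (forall M w, allT M w (G ++ At) -> ~ exT M w (D ++ Dt) ->
     allT M w (G' ++ At') /\ ~ exT M w (D' ++ Dt')) ->
  CM L G At P D Dt -> CM L G' At' P D' Dt'.
Proof.
move=> h [M [w [hM [hL [hG [hP hX]]]]]]; exists M, w.
have [h1 h2] := h M w hG hX; by do !split.
Qed.

Lemma pmove (T : Type) (G At Y : seq T) x :
  Permutation (G ++ At ++ x :: Y) (x :: G ++ At ++ Y).
Proof. rewrite !catA; apply: Permutation_sym; exact: perm_mid. Qed.

Ltac cmt := let M := fresh "M" in let w := fresh "w" in
  move=> M w; rewrite ?allT_cat ?exT_cat /= ?allT_cat ?exT_cat; tauto.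

Lemma compl_main (A : finType) L d : forall n (G At : seq (form A)) P D Dt,
  (forall f, List.In f At -> isVar f) -> (forall f, List.In f Dt -> omegaOK f) ->
  md (G ++ At ++ map (@Bx A) P ++ D ++ Dt) <= d -> sumw G + sumw D <= n ->
  derivable L (G ++ At ++ map (@Bx A) P) (D ++ Dt) \/ CM L G At P D Dt.
Proof.
elim/ltn_ind: d => d IHd.
have IHb : forall G D : seq (form A), G ++ D <> [::] ->
    (forall f, List.In f (G ++ D) -> depth f < d) ->
    derivable L G D \/ exists (M : model A) w, cls L M /\ allT M w G /\ ~ exT M w D.
  move=> G D hne hlt.
  have hd : md (G ++ D) < d.
    apply: md_lt => //; move: hne hlt; case: (G ++ D) => [//|f l] _ h.
    have := h f (or_introl erefl); lia.
  have := IHd _ hd (sumw G + sumw D) G [::] [::] D [::].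
  case.
  - by [].
  - by [].
  - rewrite !md_cat /=; lia.
  - by [].
  - by rewrite /= !cats0 => h; left.
  - move=> [M [w [hM [_ [hG [_ hD]]]]]]; right; exists M, w; by rewrite !cats0 in hG hD.
elim=> [|n IHn] G At P D Dt hA hD hd hn.
  case: G hd hn => [|f G] hd hn; last by have := wt_pos f; move: hn => /=; lia.
  case: D hd hn => [|f D] hd hn; last by have := wt_pos f; move: hn => /=; lia.
  exact: base IHb hA hD hd.
case: G hd hn => [|f G] hd hn.
  case: D hd hn => [|f D] hd hn; first exact: base IHb hA hD hd.
  have moveR : omegaOK f -> derivable L ([::] ++ At ++ map (@Bx A) P) ((f :: D) ++ Dt) \/
                           CM L [::] At P (f :: D) Dt.
    move=> hf.
    case: (IHn [::] At P D (f :: Dt) hA) => //.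
    + by move=> g [<-|hg] //; apply: hD.
    + move: hd; rewrite !md_cat /=; lia.
    + move: hn; rewrite /=; have := wt_pos f; lia.
    + move=> h; left; apply: (Exch h (Permutation_refl _)); exact: Permutation_sym (perm_mid _ _ _).
    + move=> h; right; apply: CM_mono h; cmt.
  case: f hd hn moveR => [x||a b|a b|a b|a|H b] hd hn moveR; try exact: moveR.
  + case: (IHn [::] At P (a :: D) Dt hA hD) => [||h1|h1].
    * move: hd; rewrite !md_cat /=; lia.
    * move: hn; rewrite /=; lia.
    * case: (IHn [::] At P (b :: D) Dt hA hD) => [||h2|h2].
      -- move: hd; rewrite !md_cat /=; lia.
      -- move: hn; rewrite /=; lia.
      -- left; exact: RAnd.
      -- right; apply: CM_mono h2; cmt.
    * right; apply: CM_mono h1; cmt.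
  + case: (IHn [::] At P (a :: b :: D) Dt hA hD) => [||h|h].
    * move: hd; rewrite !md_cat /=; lia.
    * move: hn; rewrite /=; lia.
    * left; exact: ROr.
    * right; apply: CM_mono h; cmt.
  + case: (IHn [:: a] At P (b :: D) Dt hA hD) => [||h|h].
    * move: hd; rewrite !md_cat /=; lia.
    * move: hn; rewrite /=; lia.
    * left; exact: RImp.
    * right; apply: CM_mono h; cmt.
  + case: (IHn [:: a] At P D Dt hA hD) => [||h|h].
    * move: hd; rewrite !md_cat /=; lia.
    * move: hn; rewrite /=; lia.
    * left; exact: RNeg.
    * right; apply: CM_mono h; cmt.
case: f hd hn => [x||a b|a b|a b|a|H b] hd hn.
- case: (IHn G (Var A x :: At) P D Dt) => [||||h|h].
  + by move=> g [<-|hg]; [exists x|apply: hA].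
  + exact: hD.
  + move: hd; rewrite !md_cat /=; lia.
  + move: hn; rewrite /=; lia.
  + left; apply: (Exch h _ (Permutation_refl _)); exact: Permutation_sym (perm_mid _ _ _).
  + right; apply: CM_mono h; cmt.
- by left; apply: BotL.
- case: (IHn [:: a, b & G] At P D Dt hA hD) => [||h|h].
  + move: hd; rewrite !md_cat /=; lia.
  + move: hn; rewrite /=; lia.
  + left; exact: LAnd.
  + right; apply: CM_mono h; cmt.
- case: (IHn (a :: G) At P D Dt hA hD) => [||h1|h1].
  + move: hd; rewrite !md_cat /=; lia.
  + move: hn; rewrite /=; lia.
  + case: (IHn (b :: G) At P D Dt hA hD) => [||h2|h2].
    * move: hd; rewrite !md_cat /=; lia.
    * move: hn; rewrite /=; lia.
    * left; exact: LOr.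
    * right; apply: CM_mono h2; cmt.
  + right; apply: CM_mono h1; cmt.
- case: (IHn G At P (a :: D) Dt hA hD) => [||h1|h1].
  + move: hd; rewrite !md_cat /=; lia.
  + move: hn; rewrite /=; lia.
  + case: (IHn (b :: G) At P D Dt hA hD) => [||h2|h2].
    * move: hd; rewrite !md_cat /=; lia.
    * move: hn; rewrite /=; lia.
    * left; exact: LImp.
    * right; apply: CM_mono h2; cmt.
  + right; apply: CM_mono h1; cmt.
- case: (IHn G At P (a :: D) Dt hA hD) => [||h|h].
  + move: hd; rewrite !md_cat /=; lia.
  + move: hn; rewrite /=; lia.
  + left; exact: LNeg.
  + right; apply: CM_mono h; cmt.
- case: (classic (L = LKT)) => hLT.
  + case: (IHn (b :: G) At ((H, b) :: P) D Dt hA hD) => [||h|h].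
    * move: hd; rewrite !md_cat /=; lia.
    * move: hn; rewrite /=; lia.
    * left; apply: (DT hLT); apply: (Exch h _ (Permutation_refl _)).
      rewrite /=; have := pmove (b :: G) At (map (@Bx A) P) (Box H b); rewrite /Bx /=; exact.
    * right; case: h => M [w [hM [hL [hG [hP hX]]]]]; exists M, w.
      split=> //; split=> //; split; last split=> //.
      -- move: hG => /= [hb hG]; split=> //.
         move=> v hv; case: (classic (v = w)) => [->|hne]; first exact: hb.
         exact: (hP (H, b) (or_introl erefl) v hne hv).
      -- by move=> p hp; apply: hP; right.
  + case: (IHn G At ((H, b) :: P) D Dt hA hD) => [||h|h].
    * move: hd; rewrite !md_cat /=; lia.
    * move: hn; rewrite /=; lia.
    * left; apply: (Exch h _ (Permutation_refl _)).
      have := pmove G At (map (@Bx A) P) (Box H b); rewrite /Bx /=; exact.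
    * right; case: h => M [w [hM [hL [hG [hP hX]]]]]; exists M, w.
      split=> //; split=> //; split; last split=> //.
      -- rewrite /=; split=> //.
         move=> v hv; case: (classic (v = w)) => [e|hne].
           subst v; have [a0 ha0] := grp_ex H; by case: (hL hLT a0 (hv a0 ha0)).
         exact: (hP (H, b) (or_introl erefl) v hne hv).
      -- by move=> p hp; apply: hP; right.
Qed.

Lemma completeness (A : finType) L (G D : seq (form A)) : valid L G D -> derivable L G D.
Proof.
move=> hv.
case: (@compl_main A L (md (G ++ D)) (sumw G + sumw D) G [::] [::] D [::]) => //.
- rewrite !md_cat /=; lia.
- by rewrite /= !cats0.
- move=> [M [w [hM [_ [hG [_ hD]]]]]]; rewrite !cats0 in hG hD.
  by case: hD; apply: hv.
Qed.

Definition allg (A : finType) : seq (grp A) := pmap insub (enum {set A}).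

Lemma allg_In (A : finType) (H : grp A) : List.In H (allg A).
Proof.
apply: mem_In; rewrite mem_pmap; apply/mapP; exists (val H).
  by rewrite mem_enum.
by rewrite valK.
Qed.

Fixpoint bools (n : nat) : seq (seq bool) :=
  match n with
  | 0 => [:: [::]]
  | n.+1 => map (cons true) (bools n) ++ map (cons false) (bools n)
  end.

Lemma bools_In (s : seq bool) : List.In s (bools (size s)).
Proof.
elim: s => [|b s IH] /=; first by left.
apply/In_cat; case: b; [left|right]; apply/In_map_iff; by exists s.
Qed.

Lemma bools_size n s : List.In s (bools n) -> size s = n.
Proof.
elim: n s => [|n IH] s /=; first by case=> [<-|[]].
by case/In_cat => /In_map_iff [t [<- ht]] /=; rewrite (IH _ ht).
Qed.

Fixpoint cnj (A : finType) (gs : seq (form A)) (s : seq bool) : form A :=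
  match gs, s with
  | g :: gs', b :: s' => And (if b then g else Neg g) (cnj gs' s')
  | _, _ => Top A
  end.

Definition dnf (A : finType) (gs : seq (form A)) (S : seq (seq bool)) : form A :=
  foldr (fun s acc => Or (cnj gs s) acc) Bot S.

Fixpoint matchv (A : finType) (M : model A) w (gs : seq (form A)) (s : seq bool) : Prop :=
  match gs, s with
  | g :: gs', b :: s' => (sat M w g <-> b = true) /\ matchv M w gs' s'
  | [::], [::] => True
  | _, _ => False
  end.

Lemma conj_sat (A : finType) (M : model A) w gs s :
  size s = size gs -> (sat M w (cnj gs s) <-> matchv M w gs s).
Proof.
elim: gs s => [|g gs IH] s e.
  by case: s e => //= _; split=> // _ [].
case: s e => [//|b s] /= e.
rewrite IH; last by case: e.
case: b => /=; split.
- by move=> [h1 h2]; split=> //; split.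
- by move=> [h1 h2]; split=> //; apply/h1.
- by move=> [h1 h2]; split=> //; split=> // h; case: (h1 h).
- by move=> [h1 h2]; split=> // h; have := proj1 h1 h.
Qed.

Lemma match_ex (A : finType) (M : model A) w gs :
  exists s, size s = size gs /\ matchv M w gs s.
Proof.
elim: gs => [|g gs [s [e h]]]; first by exists [::].
case: (classic (sat M w g)) => hg.
- by exists (true :: s); rewrite /= e; do !split.
- exists (false :: s); rewrite /= e; do !split=> //; by move=> h'; case: (hg h').
Qed.

Lemma match_uniq (A : finType) (M : model A) w gs s s' :
  matchv M w gs s -> matchv M w gs s' -> s = s'.
Proof.
elim: gs s s' => [|g gs IH] [|b s] [|b' s'] //= [h1 h2] [h1' h2'].
rewrite (IH _ _ h2 h2'); congr (_ :: _).
case: b b' h1 h1' => [] [] //= h1 h1'.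
- by have := proj1 h1' (proj2 h1 erefl).
- by have := proj1 h1 (proj2 h1' erefl).
Qed.

Lemma dnf_sat (A : finType) (M : model A) w gs S :
  sat M w (dnf gs S) <-> exists s, List.In s S /\ sat M w (cnj gs s).
Proof.
elim: S => [|s S IH] /=; first by split=> // [[s []]].
rewrite IH; split.
- by case=> [h|[t [h1 h2]]]; [exists s|exists t]; auto.
- by case=> t [[<-|h1] h2]; [left|right; exists t].
Qed.

Definition Ev (A : finType) (M : model A) w gs (p : pred (seq bool)) :=
  forall s, size s = size gs -> matchv M w gs s -> p s.

Definition repr (A : finType) (gs : seq (form A)) (f : form A) :=
  exists p : pred (seq bool), forall M w, sat M w f <-> Ev M w gs p.

Lemma Ev_iff (A : finType) (M : model A) w gs p s0 :
  size s0 = size gs -> matchv M w gs s0 -> (Ev M w gs p <-> p s0).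
Proof.
move=> e h; split; first by move=> hE; exact: hE.
move=> hp s es hs; by rewrite (match_uniq hs h).
Qed.

Lemma dnf_filter (A : finType) (M : model A) w gs (p : pred (seq bool)) :
  sat M w (dnf gs (filter p (bools (size gs)))) <-> Ev M w gs p.
Proof.
have [s0 [e0 h0]] := match_ex M w gs; rewrite (Ev_iff p e0 h0) dnf_sat; split.
- move=> [s [/In_filter [hs hp] hc]]; have es := bools_size hs.
  move/(conj_sat M w): hc => hc; by rewrite (match_uniq h0 (hc es)).
- move=> hp; exists s0; split; first by apply/In_filter; split=> //; rewrite -e0; exact: bools_In.
  by apply/(conj_sat M w).
Qed.

Definition repsOf (A : finType) (gs : seq (form A)) : seq (form A) :=
  map (fun m => dnf gs (mask m (bools (size gs)))) (bools (size (bools (size gs)))).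

Lemma repr_reps (A : finType) (gs : seq (form A)) f : repr gs f ->
  exists g, List.In g (repsOf gs) /\ forall M w, sat M w f <-> sat M w g.
Proof.
move=> [p hp]; exists (dnf gs (filter p (bools (size gs)))); split.
  apply/In_map_iff; exists (map p (bools (size gs))); rewrite -filter_mask; split=> //.
  have := bools_In (map p (bools (size gs))); by rewrite size_map.
by move=> M w; rewrite hp dnf_filter.
Qed.

Lemma matchv_nth (A : finType) (M : model A) w gs s i d :
  matchv M w gs s -> i < size gs -> (sat M w (List.nth i gs d) <-> nth false s i = true).
Proof.
elim: gs s i => [|g gs IH] [|b s] [|i] //= [h1 h2] hi.
- exact: h1.
- exact: IH h2 hi.
Qed.

Lemma repr_gen (A : finType) (gs : seq (form A)) g : List.In g gs -> repr gs g.
Proof.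
move=> hg; have [i [hi ei]] := In_nth gs g g hg.
have hi' : i < size gs by apply/ltP.
exists (fun s => nth false s i) => M w.
have [s0 [e0 h0]] := match_ex M w gs; rewrite (Ev_iff _ e0 h0).
have := matchv_nth g h0 hi'; rewrite ei; done.
Qed.

Lemma repr_equiv (A : finType) (gs : seq (form A)) f g :
  (forall M w, sat M w f <-> sat M w g) -> repr gs g -> repr gs f.
Proof. by move=> e [p hp]; exists p => M w; rewrite e hp. Qed.

Lemma repr_and (A : finType) (gs : seq (form A)) f g : repr gs f -> repr gs g -> repr gs (And f g).
Proof.
move=> [p hp] [q hq]; exists (fun s => p s && q s) => M w.
have [s0 [e0 h0]] := match_ex M w gs; rewrite (Ev_iff _ e0 h0) /= hp hq !(Ev_iff _ e0 h0).
by split; [case=> -> ->|move/andP].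
Qed.

Lemma repr_or (A : finType) (gs : seq (form A)) f g : repr gs f -> repr gs g -> repr gs (Or f g).
Proof.
move=> [p hp] [q hq]; exists (fun s => p s || q s) => M w.
have [s0 [e0 h0]] := match_ex M w gs; rewrite (Ev_iff _ e0 h0) /= hp hq !(Ev_iff _ e0 h0).
by split; [case=> ->; rewrite ?orbT|move/orP].
Qed.

Lemma repr_imp (A : finType) (gs : seq (form A)) f g : repr gs f -> repr gs g -> repr gs (Imp f g).
Proof.
move=> [p hp] [q hq]; exists (fun s => ~~ p s || q s) => M w.
have [s0 [e0 h0]] := match_ex M w gs; rewrite (Ev_iff _ e0 h0) /= hp hq !(Ev_iff _ e0 h0).
split.
- by case: (p s0) => //= h; apply: h.
- by case: (p s0) => //= h _.
Qed.

Lemma repr_neg (A : finType) (gs : seq (form A)) f : repr gs f -> repr gs (Neg f).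
Proof.
move=> [p hp]; exists (fun s => ~~ p s) => M w.
have [s0 [e0 h0]] := match_ex M w gs; rewrite (Ev_iff _ e0 h0) /= hp !(Ev_iff _ e0 h0).
by case: (p s0); split=> // h; case: h.
Qed.

Lemma repr_bot (A : finType) (gs : seq (form A)) : repr gs Bot.
Proof.
exists (fun _ => false) => M w.
have [s0 [e0 h0]] := match_ex M w gs; by rewrite (Ev_iff _ e0 h0).
Qed.

Lemma In_mem (T : eqType) (x : T) (s : seq T) : List.In x s -> x \in s.
Proof. elim: s => [|y s IH] //= [->|h]; rewrite in_cons ?eqxx //; by rewrite IH ?orbT. Qed.

Lemma In_flatten (T : Type) (x : T) (ss : seq (seq T)) :
  List.In x (flatten ss) <-> exists s, List.In s ss /\ List.In x s.
Proof.
elim: ss => [|s ss IH] /=; first by split=> // [[s []]].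
rewrite In_cat IH; split.
- by case=> [h|[t [h1 h2]]]; [exists s|exists t]; auto.
- by case=> t [[<-|h1] h2]; [left|right; exists t].
Qed.

Definition okL (A : finType) (Vs : seq nat) (Ag : {set A}) (f : form A) :=
  {subset vars f <= Vs} /\ agts f \subset Ag.

Definition gensOf (A : finType) (Vs : seq nat) (Ag : {set A}) (R : seq (form A)) :=
  map (Var A) Vs ++
  flatten (map (fun H => map (Box H) R) (filter (fun H : grp A => val H \subset Ag) (allg A))).

Fixpoint reps (A : finType) (Vs : seq nat) (Ag : {set A}) (d : nat) : seq (form A) :=
  match d with
  | 0 => repsOf (map (Var A) Vs)
  | d'.+1 => repsOf (gensOf Vs Ag (reps Vs Ag d'))
  end.

Definition gens (A : finType) (Vs : seq nat) (Ag : {set A}) (d : nat) : seq (form A) :=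
  match d with
  | 0 => map (Var A) Vs
  | d'.+1 => gensOf Vs Ag (reps Vs Ag d')
  end.

Lemma reps_gens (A : finType) Vs (Ag : {set A}) d : reps Vs Ag d = repsOf (gens Vs Ag d).
Proof. by case: d. Qed.

Lemma okL_bin (A : finType) Vs (Ag : {set A}) (a b : form A) :
  okL Vs Ag a -> okL Vs Ag b ->
  {subset vars a ++ vars b <= Vs} /\ agts a :|: agts b \subset Ag.
Proof.
move=> [h1 h2] [h3 h4]; split; last by rewrite subUset h2 h4.
by move=> x; rewrite mem_cat => /orP [/h1|/h3].
Qed.

Lemma okL_split (A : finType) Vs (Ag : {set A}) (a b : form A) :
  {subset vars a ++ vars b <= Vs} -> agts a :|: agts b \subset Ag ->
  okL Vs Ag a /\ okL Vs Ag b.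
Proof.
move=> h1; rewrite subUset => /andP [h2 h3]; split; split=> // x hx; apply: h1;
  by rewrite mem_cat hx ?orbT.
Qed.

Lemma nf (A : finType) Vs (Ag : {set A}) d :
  forall f : form A, okL Vs Ag f -> depth f <= d -> repr (gens Vs Ag d) f.
Proof.
elim: d => [|d IHd] f; elim: f => [x||a IHa b IHb|a IHa b IHb|a IHa b IHb|a IHa|H a IHa] [hv ha] hd;
  try (have [oa ob] := okL_split hv ha);
  rewrite /= in hd.
- apply: repr_gen; apply/In_map_iff; exists x; split=> //; apply: mem_In; apply: hv.
  by rewrite /= inE.
- exact: repr_bot.
- apply: repr_and; [apply: IHa|apply: IHb] => //; lia.
- apply: repr_or; [apply: IHa|apply: IHb] => //; lia.
- apply: repr_imp; [apply: IHa|apply: IHb] => //; lia.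
- by apply: repr_neg; apply: IHa.
- by [].
- apply: repr_gen; apply/In_cat; left; apply/In_map_iff; exists x; split=> //; apply: mem_In; apply: hv.
  by rewrite /= inE.
- exact: repr_bot.
- apply: repr_and; [apply: IHa|apply: IHb] => //; lia.
- apply: repr_or; [apply: IHa|apply: IHb] => //; lia.
- apply: repr_imp; [apply: IHa|apply: IHb] => //; lia.
- by apply: repr_neg; apply: IHa.
- move: ha; rewrite /= subUset => /andP [hH ha'].
  have [g [hg eg]] := repr_reps (IHd a (conj hv ha') hd).
  apply: (@repr_equiv _ _ _ (Box H g)).
    by move=> M w /=; split=> h v hv'; [apply/eg|apply/eg]; apply: h.
  apply: repr_gen; apply/In_cat; right; apply/In_flatten.
  exists (map (Box H) (reps Vs Ag d)); split.
    apply/In_map_iff; exists H; split=> //; apply/In_filter; split=> //; exact: allg_In.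
  by apply/In_map_iff; exists g; split=> //; rewrite reps_gens.
Qed.

Lemma okL_cnj (A : finType) Vs (Ag : {set A}) (gs : seq (form A)) s :
  (forall g, List.In g gs -> okL Vs Ag g) -> okL Vs Ag (cnj gs s).
Proof.
elim: gs s => [|g gs IH] [|b s] h /=; try (by split=> //; rewrite sub0set).
have [h1 h2] : okL Vs Ag g by apply: h; left.
have [h3 h4] : okL Vs Ag (cnj gs s) by apply: IH => g' hg'; apply: h; right.
split; last by rewrite subUset h4 andbT; case: b.
move=> x; rewrite mem_cat => /orP [|/h3 //]; case: b => /h1 //.
Qed.

Lemma okL_dnf (A : finType) Vs (Ag : {set A}) (gs : seq (form A)) S :
  (forall g, List.In g gs -> okL Vs Ag g) -> okL Vs Ag (dnf gs S).
Proof.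
move=> h; elim: S => [|s S [h1 h2]] /=; first by split=> //; rewrite sub0set.
have [h3 h4] := okL_cnj s h.
split; last by rewrite subUset h2 h4.
by move=> x; rewrite mem_cat => /orP [/h3|/h1].
Qed.

Lemma reps_ok (A : finType) Vs (Ag : {set A}) d (f : form A) :
  List.In f (reps Vs Ag d) -> okL Vs Ag f.
Proof.
elim: d f => [|d IH] f; rewrite reps_gens => /In_map_iff [m [<- _]]; apply: okL_dnf => g.
- move=> /In_map_iff [x [<- hx]]; split; last by rewrite sub0set.
  by move=> y; rewrite /= inE => /eqP ->; apply: In_mem.
- case/In_cat.
  + move=> /In_map_iff [x [<- hx]]; split; last by rewrite sub0set.
    by move=> y; rewrite /= inE => /eqP ->; apply: In_mem.
  + move=> /In_flatten [s [/In_map_iff [H [<- /In_filter [_ hH]]] /In_map_iff [g' [<- hg']]]].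
    have [h1 h2] := IH _ hg'; split=> //=; by rewrite subUset hH h2.
Qed.

Lemma soundness (A : finType) L (G D : seq (form A)) : derivable L G D -> valid L G D.
Proof.
move=> hd.
have [I /InterpE [v [w _]]] := craig_prop hd (G2 := [::]) (D2 := [::])
   (ltac:(rewrite cats0; exact: Permutation_refl)) (ltac:(rewrite cats0; exact: Permutation_refl)).
move=> M x hM hG; case: (v M x hM hG) => [hI|//].
by case: (w M x hM (conj hI Logic.I)).
Qed.

Lemma cfilter (T : Type) (P : T -> Prop) (l : seq T) :
  exists l', forall x, List.In x l' <-> List.In x l /\ P x.
Proof.
elim: l => [|y l [l' h]]; first by exists [::] => x; split=> // [[]].
case: (classic (P y)) => hy.
- exists (y :: l') => x /=; rewrite h; split.
  + by case=> [<-|[]]; auto.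
  + by case=> [[<-|hx] hp]; auto.
- exists l' => x /=; rewrite h; split.
  + by case; auto.
  + by case=> [[<-|hx] hp]; auto.
Qed.

Definition bigAnd (A : finType) (l : seq (form A)) : form A := foldr (@And A) (Top A) l.

Lemma bigAnd_sat (A : finType) (M : model A) w l :
  sat M w (bigAnd l) <-> forall f, List.In f l -> sat M w f.
Proof.
elim: l => [|f l IH] /=; first by split=> // _ [].
rewrite IH; split; first by move=> [h1 h2] g [<-|]; auto.
by move=> h; split; auto.
Qed.

Lemma bigAnd_ok (A : finType) Vs (Ag : {set A}) l :
  (forall f, List.In f l -> okL Vs Ag f) -> okL Vs Ag (bigAnd l).
Proof.
elim: l => [|f l IH] h /=; first by split=> //; rewrite sub0set.
have [h1 h2] : okL Vs Ag f by apply: h; left.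
have [h3 h4] := IH (fun g hg => h g (or_intror hg)).
split; last by rewrite subUset h2 h4.
by move=> x; rewrite mem_cat => /orP [/h1|/h3].
Qed.

Lemma post (A : finType) L (alpha : form A) (Q : seq nat) (B : {set A}) :
  exists I : form A, avoids Q B I /\ derivable L [:: alpha] [:: I] /\
    (forall beta, avoids Q B beta -> derivable L [:: alpha] [:: beta] -> derivable L [:: I] [:: beta]).
Proof.
pose Vs := [seq x <- vars alpha | x \notin Q].
pose Ag := agts alpha :\: B.
pose d := depth alpha.
have [Ls hLs] := cfilter (fun f => valid L [:: alpha] [:: f]) (reps Vs Ag d).
have hok : okL Vs Ag (bigAnd Ls).
  by apply: bigAnd_ok => f /hLs [hf _]; exact: reps_ok hf.
exists (bigAnd Ls); split; [|split].
- case: hok => h1 h2; split.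
    move=> q hq; apply/negP => /h1; by rewrite mem_filter hq.
  rewrite disjoints_subset; apply/subsetP => a /(subsetP h2); by rewrite !inE => /andP [].
- apply: completeness => M w hM /= [ha _]; left; apply/bigAnd_sat => f /hLs [_ hv].
  by case: (hv M w hM (conj ha Logic.I)).
- move=> beta [hQ hB] hder.
  have [J /InterpE [v [w [[l1 l2] [[m1 m2] hd]]]]] :=
    craig_prop hder (G1 := [:: alpha]) (G2 := [::]) (D1 := [::]) (D2 := [:: beta])
      (Permutation_refl _) (Permutation_refl _).
  have okJ : okL Vs Ag J.
    split.
    + move=> x hx; have := l1 x hx; have := m1 x hx; rewrite /= !cats0 => hb ha.
      rewrite mem_filter ha andbT; apply/negP => hq; by move: (hQ x hq); rewrite hb.
    + apply/subsetP => a ha; have := subsetP l2 a ha; have := subsetP m2 a ha.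
      rewrite /= !setU0 => hb ha'; rewrite inE ha' andbT.
      by rewrite (disjointFr hB hb).
  have [g [hg eg]] := repr_reps (nf okJ (d := d) ltac:(move: hd; rewrite /= /d; lia)).
  rewrite -reps_gens in hg.
  have hgL : List.In g Ls.
    apply/hLs; split=> // M x hM hx; left; apply/eg.
    by case: (v M x hM hx).
  apply: completeness => M x hM /= [hI _].
  have hJ : sat M x J by apply/eg; move/bigAnd_sat: hI; apply.
  exact: (w M x hM (conj hJ Logic.I)).
Qed.

Theorem corollary6p21 (A : finType) (L : logic) (alpha : form A)
    (Q : seq nat) (B : {set A}) :
  0 < #|A| ->
  {subset Q <= vars alpha} ->
  B \subset agts alpha ->
  (exists Ipre : form A,
      avoids Q B Ipre /\
      derivable L [:: Ipre] [:: alpha] /\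
      (forall beta : form A, avoids Q B beta ->
         derivable L [:: beta] [:: alpha] -> derivable L [:: beta] [:: Ipre]))
  /\
  (exists Ipost : form A,
      avoids Q B Ipost /\
      derivable L [:: alpha] [:: Ipost] /\
      (forall beta : form A, avoids Q B beta ->
         derivable L [:: alpha] [:: beta] -> derivable L [:: Ipost] [:: beta])).
Proof.
move=> _ _ _; split; last exact: post.
have [I [hav [hd hp]]] := post L (Neg alpha) Q B.
exists (Neg I); split; [exact: hav|split].
- apply: completeness => M w hM /= [hnI _]; left.
  apply: NNPP => hna; apply: hnI.
  by case: (soundness hd hM (conj hna Logic.I)).
- move=> beta hb hder.
  have hs := soundness hder.
  have h2 : derivable L [:: Neg alpha] [:: Neg beta].
    apply: completeness => M w hM /= [hna _]; left => hbt.
    by case: (hs M w hM (conj hbt Logic.I)).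
  have h3 := soundness (hp (Neg beta) hb h2).
  apply: completeness => M w hM /= [hbt _]; left => hI.
  by case: (h3 M w hM (conj hI Logic.I)).
Qed.
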